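(* Let $n\ge3$, let $(f,\Gamma)$ satisfy the standing structural assumptions, let $R>0$ and $x_0\in\mathbb R^n$. Then $u^{(in)}_{R,x_0}$ is the unique continuous viscosity solution of $f(\lambda(-A^u))=1$, $u>0$ in $B_R(x_0)$, with $u(x)\to+\infty$ as $\mathrm{dist}(x,\partial B_R(x_0))\to0$.
   Context: Let $n\ge3$. For a positive $C^2$ function $u$, its conformal Hessian is $A^u=-\frac{2}{n-2}u^{-\frac{n+2}{n-2}}\nabla^2u+\frac{2n}{(n-2)^2}u^{-\frac{2n}{n-2}}\nabla u\otimes\nabla u-\frac{2}{(n-2)^2}u^{-\frac{2n}{n-2}}|\nabla u|^2I$, and $\lambda(-A^u)$ is the vector of eigenvalues of $-A^u$. Let $\Gamma_n=\{\mu:\mu_i>0\ \forall i\}$. Standing structural assumptions on $(f,\Gamma)$: $\Gamma\subset\mathbb R^n$ is an open symmetric cone with vertex at the origin, $\Gamma+\Gamma_n\subset\Gamma$; $f\in C^0(\bar\Gamma)$ symmetric, $f>0$ in $\Gamma$, $f=0$ on $\partial\Gamma$, $f(\lambda+\mu)\ge f(\lambda)$ for $\lambda\in\Gamma,\mu\in\Gamma_n$, $f$ homogeneous of some positive degree. Viscosity solutions: sub-solutions $u\in USC$ satisfy $f(\lambda(-A^\varphi(x_0)))\ge1$ for every $C^2$ $\varphi$ touching $u$ from above at $x_0$; super-solutions $u\in LSC$ satisfy either $\lambda(-A^\varphi(x_0))\notin\bar\Gamma$ or $f(\lambda(-A^\varphi(x_0)))\le1$ for every $C^2$ $\varphi$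 touching from below; solutions are continuous functions that are both. Canonical solutions: there is a unique constant $\alpha=\alpha(f)>0$ such that for all $R>0$, $x_0\in\mathbb R^n$ the functions $u^{(in)}_{R,x_0}(x)=\alpha\big(\frac{R}{R^2-|x-x_0|^2}\big)^{\frac{n-2}{2}}$ and $u^{(out)}_{R,x_0}(x)=\alpha\big(\frac{R}{|x-x_0|^2-R^2}\big)^{\frac{n-2}{2}}$ satisfy $f(\lambda(-A^{u}))=1$ in $B_R(x_0)$ and in $\mathbb R^n\setminus\bar B_R(x_0)$ respectively (the eigenvalue vectors being constant). *)

(* Defs.v *)
From mathcomp Require Import all_boot.
From Stdlib Require Import Reals.
Set Implicit Arguments. Unset Strict Implicit.
Open Scope R_scope.

Definition Vec (n : nat) := 'I_n -> R.

Definition vadd {n} (x y : Vec n) : Vec n := fun i => x i + y i.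
Definition vsub {n} (x y : Vec n) : Vec n := fun i => x i - y i.
Definition vscale {n} (t : R) (x : Vec n) : Vec n := fun i => t * x i.
Definition vconst n (c : R) : Vec n := fun _ => c.
Definition kdelta {n} (i j : 'I_n) : R := if i == j then 1 else 0.
Definition ebasis {n} (i : 'I_n) : Vec n := fun j => kdelta i j.

Definition sumI n (F : 'I_n -> R) : R := \big[Rplus/0]_(i < n) F i.
Definition norm2 {n} (x : Vec n) : R := sumI (fun i => x i * x i).
Definition norm {n} (x : Vec n) : R := sqrt (norm2 x).

Definition ball {n} (x0 : Vec n) (r : R) : Vec n -> Prop :=
  fun x => norm (vsub x x0) < r.
Definition outside_cball {n} (x0 : Vec n) (r : R) : Vec n -> Prop :=
  fun x => r < norm (vsub x x0).

Definition cont_on {n} (U : Vec n -> Prop) (g : Vec n -> R) : Prop :=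
  forall x, U x -> forall eps, 0 < eps -> exists delta, 0 < delta /\
    forall y, U y -> norm (vsub y x) < delta -> Rabs (g y - g x) < eps.

Definition closure {n} (S : Vec n -> Prop) : Vec n -> Prop :=
  fun mu => forall eps, 0 < eps -> exists nu, S nu /\ norm (vsub nu mu) < eps.

Definition Gamma_n {n} : Vec n -> Prop := fun mu => forall i, 0 < mu i.

(** [Dg i x] is the i-th partial derivative, [D2g i j x] = d_j d_i g (x). *)
Definition C2_on {n} (U : Vec n -> Prop) (g : Vec n -> R)
  (Dg : 'I_n -> Vec n -> R) (D2g : 'I_n -> 'I_n -> Vec n -> R) : Prop :=
  (forall x, U x -> forall i,
      derivable_pt_lim (fun t => g (vadd x (vscale t (ebasis i)))) 0 (Dg i x)) /\
  (forall x, U x -> forall i j,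
      derivable_pt_lim (fun t => Dg i (vadd x (vscale t (ebasis j)))) 0 (D2g i j x)) /\
  cont_on U g /\ (forall i, cont_on U (Dg i)) /\ (forall i j, cont_on U (D2g i j)).

Definition conf_hess n (g : Vec n -> R) (Dg : 'I_n -> Vec n -> R)
  (D2g : 'I_n -> 'I_n -> Vec n -> R) (x : Vec n) : 'I_n -> 'I_n -> R :=
  let N := INR n in
  fun i j =>
    - (2 / (N - 2)) * Rpower (g x) (- ((N + 2) / (N - 2))) * D2g i j x
    + (2 * N / ((N - 2) * (N - 2))) * Rpower (g x) (- (2 * N / (N - 2)))
        * (Dg i x * Dg j x)
    - (2 / ((N - 2) * (N - 2))) * Rpower (g x) (- (2 * N / (N - 2)))
        * sumI (fun k => Dg k x * Dg k x) * kdelta i j.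

(** mu is a vector of eigenvalues of the (symmetric) matrix M:
    Q^T M Q = diag(mu) for some orthogonal Q. *)
Definition eigvals n (M : 'I_n -> 'I_n -> R) (mu : Vec n) : Prop :=
  exists Q : 'I_n -> 'I_n -> R,
    (forall i j, sumI (fun k => Q k i * Q k j) = kdelta i j) /\
    (forall i j, sumI (fun k => sumI (fun l => Q k i * M k l * Q l j))
                 = kdelta i j * mu i).

Definition neg_mx n (M : 'I_n -> 'I_n -> R) : 'I_n -> 'I_n -> R :=
  fun i j => - M i j.

Record structural n (Gam : Vec n -> Prop) (f : Vec n -> R) : Prop := {
  Gam_open : forall mu, Gam mu -> exists eps, 0 < eps /\
      forall nu, norm (vsub nu mu) < eps -> Gam nu;
  Gam_sym : forall (s : 'I_n -> 'I_n) mu, bijective s -> Gam mu ->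
      Gam (fun i => mu (s i));
  Gam_cone : forall mu t, Gam mu -> 0 < t -> Gam (vscale t mu);
  Gam_add : forall mu nu, Gam mu -> Gamma_n nu -> Gam (vadd mu nu);
  f_cont : cont_on (closure Gam) f;
  f_sym : forall (s : 'I_n -> 'I_n) mu, bijective s -> closure Gam mu ->
      f (fun i => mu (s i)) = f mu;
  f_pos : forall mu, Gam mu -> 0 < f mu;
  f_bdry : forall mu, closure Gam mu -> ~ Gam mu -> f mu = 0;
  f_mono : forall mu nu, Gam mu -> Gamma_n nu -> f mu <= f (vadd mu nu);
  f_homog : exists p, 0 < p /\ forall mu t, closure Gam mu -> 0 < t ->
      f (vscale t mu) = Rpower t p * f mu
}.

Definition visc_sub n (Gam : Vec n -> Prop) (f : Vec n -> R)
  (Om : Vec n -> Prop) (u : Vec n -> R) : Prop :=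
  forall x0 r phi Dphi D2phi, Om x0 -> 0 < r ->
    (forall y, ball x0 r y -> Om y) ->
    C2_on (ball x0 r) phi Dphi D2phi ->
    phi x0 = u x0 -> (forall y, ball x0 r y -> u y <= phi y) ->
    forall mu, eigvals (neg_mx (conf_hess phi Dphi D2phi x0)) mu ->
      closure Gam mu /\ 1 <= f mu.

Definition visc_super n (Gam : Vec n -> Prop) (f : Vec n -> R)
  (Om : Vec n -> Prop) (u : Vec n -> R) : Prop :=
  forall x0 r phi Dphi D2phi, Om x0 -> 0 < r ->
    (forall y, ball x0 r y -> Om y) ->
    C2_on (ball x0 r) phi Dphi D2phi ->
    phi x0 = u x0 -> (forall y, ball x0 r y -> phi y <= u y) ->
    forall mu, eigvals (neg_mx (conf_hess phi Dphi D2phi x0)) mu ->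
      ~ closure Gam mu \/ f mu <= 1.

Definition visc_solution n (Gam : Vec n -> Prop) (f : Vec n -> R)
  (Om : Vec n -> Prop) (u : Vec n -> R) : Prop :=
  cont_on Om u /\ visc_sub Gam f Om u /\ visc_super Gam f Om u.

Definition classical_solution n (Gam : Vec n -> Prop) (f : Vec n -> R)
  (Om : Vec n -> Prop) (u : Vec n -> R) : Prop :=
  (forall x, Om x -> 0 < u x) /\
  exists Du D2u, C2_on Om u Du D2u /\
    forall x, Om x -> forall mu, eigvals (neg_mx (conf_hess u Du D2u x)) mu ->
      closure Gam mu /\ f mu = 1.

Definition u_in n (alpha Rad : R) (x0 : Vec n) : Vec n -> R :=
  fun x => alpha * Rpower (Rad / (Rad * Rad - norm2 (vsub x x0))) ((INR n - 2) / 2).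
Definition u_out n (alpha Rad : R) (x0 : Vec n) : Vec n -> R :=
  fun x => alpha * Rpower (Rad / (norm2 (vsub x x0) - Rad * Rad)) ((INR n - 2) / 2).

(** u(x) -> +infinity as dist(x, dB_R(x0)) = R - |x - x0| -> 0, x in B_R(x0). *)
Definition blows_up_at_bdry n (x0 : Vec n) (Rad : R) (u : Vec n -> R) : Prop :=
  forall M, exists delta, 0 < delta /\
    forall x, ball x0 Rad x -> Rad - norm (vsub x x0) < delta -> M < u x.

(* Main.v *)
From HB Require Import structures.
Require Import Defs.
From mathcomp Require Import all_boot.
From Stdlib Require Import Reals Lra FunctionalExtensionality Classical.
From Coquelicot Require Coquelicot.
Open Scope R_scope.
Set Implicit Arguments. Unset Strict Implicit.

Lemma Rplus_assoc_ssr : associative Rplus. Proof. move=> *; ring. Qed.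
HB.instance Definition _ := Monoid.isComLaw.Build R 0 Rplus Rplus_assoc_ssr Rplus_comm Rplus_0_l.

Lemma sumI_ext n (F G : 'I_n -> R) : (forall i, F i = G i) -> sumI F = sumI G.
Proof. move=> H; rewrite /sumI; apply: eq_bigr => i _; exact: H. Qed.

Lemma sumI_add n (F G : 'I_n -> R) : sumI (fun i => F i + G i) = sumI F + sumI G.
Proof. rewrite /sumI; exact: big_split. Qed.

Lemma sumI_scal n c (F : 'I_n -> R) : sumI (fun i => c * F i) = c * sumI F.
Proof.
rewrite /sumI; elim/big_rec2: _ => [|i y1 y2 _ ->]; first ring. ring.
Qed.

Lemma sumI_scalr n c (F : 'I_n -> R) : sumI (fun i => F i * c) = sumI F * c.
Proof. rewrite (@sumI_ext _ _ (fun i => c * F i)); [rewrite sumI_scal; ring|move=> i; ring]. Qed.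

Lemma sumI_opp n (F : 'I_n -> R) : sumI (fun i => - F i) = - sumI F.
Proof. rewrite (@sumI_ext _ _ (fun i => (-1) * F i)); [rewrite sumI_scal; ring|move=> i; ring]. Qed.

Lemma sumI_sub n (F G : 'I_n -> R) : sumI (fun i => F i - G i) = sumI F - sumI G.
Proof. rewrite sumI_add sumI_opp; ring. Qed.

Lemma sumI_0 n : sumI (fun _ : 'I_n => 0) = 0.
Proof. rewrite /sumI; exact: big1. Qed.

Lemma sumI_le n (F G : 'I_n -> R) : (forall i, F i <= G i) -> sumI F <= sumI G.
Proof.
move=> H; rewrite /sumI; elim/big_rec2: _ => [|i y1 y2 _ Hy]; first lra.
have := H i; lra.
Qed.

Lemma sumI_ge0 n (F : 'I_n -> R) : (forall i, 0 <= F i) -> 0 <= sumI F.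
Proof. move=> H; rewrite -(@sumI_0 n); exact: sumI_le. Qed.

Lemma sumI_abs n (F : 'I_n -> R) : Rabs (sumI F) <= sumI (fun i => Rabs (F i)).
Proof.
rewrite /sumI; elim/big_rec2: _ => [|i y1 y2 _ Hy]; first (rewrite Rabs_R0; lra).
apply: Rle_trans (Rabs_triang _ _) _; lra.
Qed.

Lemma sumI_D1 n (F : 'I_n -> R) i : sumI F = F i + sumI (fun k => if k == i then 0 else F k).
Proof.
rewrite /sumI (bigD1 i) //=; congr (_ + _).
rewrite [RHS](bigD1 i) //= eqxx Rplus_0_l; apply: eq_bigr => k /negbTE ->; done.
Qed.

Lemma sumI_kdelta_l n (F : 'I_n -> R) i : sumI (fun k => kdelta i k * F k) = F i.
Proof.
rewrite (@sumI_D1 _ _ i) (@sumI_ext _ _ (fun _ => 0)) ?sumI_0 /kdelta ?eqxx; first ring.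
move=> k; case: (boolP (k == i)) => // Hk.
by rewrite eq_sym (negbTE Hk); ring.
Qed.

Lemma kdelta_sym n (i j : 'I_n) : kdelta i j = kdelta j i.
Proof. by rewrite /kdelta eq_sym. Qed.

Lemma sumI_kdelta_r n (F : 'I_n -> R) i : sumI (fun k => F k * kdelta k i) = F i.
Proof.
rewrite -(@sumI_kdelta_l _ F i); apply: sumI_ext => k; rewrite kdelta_sym; ring.
Qed.

Lemma kdelta_ii n (i : 'I_n) : kdelta i i = 1.
Proof. by rewrite /kdelta eqxx. Qed.

Lemma sumI_swap n (F : 'I_n -> 'I_n -> R) :
  sumI (fun i => sumI (fun j => F i j)) = sumI (fun j => sumI (fun i => F i j)).
Proof. rewrite /sumI; exact: exchange_big. Qed.

Lemma sumI_const n c : sumI (fun _ : 'I_n => c) = INR n * c.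
Proof.
rewrite /sumI big_const_ord; elim: n => [|n IH] /=; first ring.
rewrite IH; case: n {IH} => [|n] /=; ring.
Qed.


Definition dot n (x y : Vec n) := sumI (fun i => x i * y i).

Lemma norm2_ge0 n (x : Vec n) : 0 <= norm2 x.
Proof. apply: sumI_ge0 => i; nra. Qed.

Lemma norm_ge0 n (x : Vec n) : 0 <= norm x.
Proof. exact: sqrt_pos. Qed.

Lemma norm_sq n (x : Vec n) : norm x * norm x = norm2 x.
Proof. apply: sqrt_sqrt; exact: norm2_ge0. Qed.

Lemma coord_le_norm2 n (x : Vec n) i : x i * x i <= norm2 x.
Proof.
rewrite /norm2 (@sumI_D1 _ _ i).
have : 0 <= sumI (fun k => if k == i then 0 else x k * x k).
  apply: sumI_ge0 => k; case: (k == i); nra.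
lra.
Qed.

Lemma coord_le_norm n (x : Vec n) i : Rabs (x i) <= norm x.
Proof.
rewrite -sqrt_Rsqr_abs; apply: sqrt_le_1_alt; rewrite /Rsqr; exact: coord_le_norm2.
Qed.

Lemma norm2_add n (x y : Vec n) : norm2 (vadd x y) = norm2 x + 2 * dot x y + norm2 y.
Proof.
rewrite /norm2 /dot /vadd -sumI_scal -!sumI_add; apply: sumI_ext => i; ring.
Qed.

Lemma norm2_scale n t (x : Vec n) : norm2 (vscale t x) = t * t * norm2 x.
Proof. rewrite /norm2 /vscale -sumI_scal; apply: sumI_ext => i; ring. Qed.

Lemma norm2_0 n (x : Vec n) : norm2 x = 0 -> forall i, x i = 0.
Proof. move=> H i; have := coord_le_norm2 x i; rewrite H => h; nra. Qed.

Lemma cauchy_schwarz n (x y : Vec n) : dot x y * dot x y <= norm2 x * norm2 y.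
Proof.
have Ha := norm2_ge0 x; have Hb := norm2_ge0 y.
case: (Req_dec (norm2 x) 0) => Hx.
  rewrite /dot (@sumI_ext _ _ (fun _ => 0)) ?sumI_0; first nra.
  by move=> i; rewrite (norm2_0 Hx i); ring.
have Ha' : 0 < norm2 x by apply: Rnot_le_lt => h; apply: Hx; lra.
set a := norm2 x; set d := dot x y.
have Ha2 : 0 < a by exact: Ha'.
have H := norm2_ge0 (vadd y (vscale (- (d / a)) x)).
rewrite norm2_add norm2_scale in H.
have E : dot y (vscale (- (d / a)) x) = - (d / a) * d.
  rewrite /dot /vscale /d /dot -sumI_scal; apply: sumI_ext => i; ring.
rewrite E in H.
fold a in H.
have : 0 <= norm2 y - d * d / a.
  have -> : norm2 y - d * d / a = norm2 y + 2 * (- (d / a) * d) + - (d / a) * - (d / a) * a.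
  { rewrite /a; field; exact: Hx. }
  done.
move=> h; have : d * d / a <= norm2 y by lra.
move=> h2; apply: (Rmult_le_reg_r (/ a)); first by apply: Rinv_0_lt_compat.
have -> : a * norm2 y * / a = norm2 y by field; apply: Rlt_dichotomy_converse; right; lra.
lra.
Qed.

Lemma dot_le_norm n (x y : Vec n) : dot x y <= norm x * norm y.
Proof.
have H := cauchy_schwarz x y.
have Hx := norm_ge0 x; have Hy := norm_ge0 y.
case: (Rle_dec (dot x y) 0) => h; first nra.
apply: Rsqr_incr_0; rewrite ?Rsqr_mult /Rsqr ?norm_sq; nra.
Qed.

Lemma norm_triang n (x y : Vec n) : norm (vadd x y) <= norm x + norm y.
Proof.
have Hx := norm_ge0 x; have Hy := norm_ge0 y.
apply: Rsqr_incr_0; [|exact: norm_ge0|lra].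
rewrite /Rsqr norm_sq norm2_add.
have := dot_le_norm x y; have := norm_sq x; have := norm_sq y; nra.
Qed.

Lemma vsub_split n (a b c : Vec n) : vsub a c = vadd (vsub a b) (vsub b c).
Proof. apply: functional_extensionality => i; rewrite /vsub /vadd; ring. Qed.

Lemma norm_triang_sub n (a b c : Vec n) : norm (vsub a c) <= norm (vsub a b) + norm (vsub b c).
Proof. rewrite (vsub_split a b c); exact: norm_triang. Qed.

Lemma norm2_opp n (x y : Vec n) : norm2 (vsub x y) = norm2 (vsub y x).
Proof. apply: sumI_ext => i; rewrite /vsub; ring. Qed.

Lemma norm_sym n (x y : Vec n) : norm (vsub x y) = norm (vsub y x).
Proof. by rewrite /norm norm2_opp. Qed.

Lemma norm2_self n (x : Vec n) : norm2 (vsub x x) = 0.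
Proof. rewrite /norm2 -(@sumI_0 n); apply: sumI_ext => i; rewrite /vsub; ring. Qed.

Lemma norm_self n (x : Vec n) : norm (vsub x x) = 0.
Proof. by rewrite /norm norm2_self sqrt_0. Qed.

Lemma norm_scale n t (x : Vec n) : norm (vscale t x) = Rabs t * norm x.
Proof.
rewrite /norm norm2_scale sqrt_mult; first by rewrite -(sqrt_Rsqr_abs t).
  nra. exact: norm2_ge0.
Qed.

Lemma norm_le_sumabs n (x : Vec n) : norm x <= sumI (fun i => Rabs (x i)).
Proof.
have Hs : 0 <= sumI (fun i => Rabs (x i)) by apply: sumI_ge0 => i; exact: Rabs_pos.
apply: Rsqr_incr_0; [|exact: norm_ge0|done].
rewrite /Rsqr norm_sq /norm2 /sumI.
suff: \big[Rplus/0]_(i < n) (x i * x i) <= (\big[Rplus/0]_(i < n) Rabs (x i)) * (\big[Rplus/0]_(i < n) Rabs (x i)) /\ 0 <= \big[Rplus/0]_(i < n) Rabs (x i) by case.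
elim/big_rec2: _ => [|i y1 y2 _ [Hy Hy2]]; first lra.
have := Rabs_pos (x i); have h : x i * x i = Rabs (x i) * Rabs (x i).
  by rewrite -Rabs_mult Rabs_right //; nra.
split; nra.
Qed.

Lemma ball_sub n (x0 x1 : Vec n) r :
  norm (vsub x1 x0) < r -> forall y, ball x1 (r - norm (vsub x1 x0)) y -> ball x0 r y.
Proof.
move=> H y; rewrite /ball => Hy.
have := norm_triang_sub y x1 x0; lra.
Qed.

Module EVTmod.
From HB Require Import structures.
From mathcomp Require Import all_boot all_order all_algebra.
From mathcomp Require Import all_classical all_reals all_analysis.
From mathcomp Require Import Rstruct Rstruct_topology.
From Stdlib Require Import Reals Lra FunctionalExtensionality.
Import Order.TTheory GRing.Theory Num.Theory Num.Def.
Set Implicit Arguments. Unset Strict Implicit.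

Local Open Scope classical_set_scope.
Local Open Scope ring_scope.

Definition toV n (v : 'rV[R]_n) : Vec n := fun i => v ord0 i.

Lemma toV_row n (c : Vec n) : toV (\row_i c i) = c.
Proof. apply: functional_extensionality => i; by rewrite /toV mxE. Qed.

Lemma coord_le_mx n (v : 'rV[R]_n) i : `|v ord0 i| <= `|v|.
Proof.
rewrite [leRHS]/normr /= mx_normrE.
apply/bigmax_geP; right => /=; exists (ord0, i) => //.
Qed.

Lemma ball_coord n (v w : 'rV[R]_n) (d : R) : ball v d w ->
  forall i, Rlt (Rabs (Rminus (toV w i) (toV v i))) d.
Proof.
rewrite mx_norm_ball /ball_ => H i; apply/RltP; rewrite RabsE RminusE distrC.
apply: le_lt_trans H; have := coord_le_mx (v - w) i; by rewrite !mxE.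
Qed.

Lemma ball_norm n (v w : 'rV[R]_n) (d : R) : ball v d w ->
  Rle (Defs.norm (vsub (toV w) (toV v))) (Rmult (INR n) d).
Proof.
move=> H; apply: (Rle_trans _ _ _ (norm_le_sumabs _)).
rewrite -sumI_const; apply: sumI_le => i; apply: Rlt_le; exact: ball_coord.
Qed.

Lemma EVT_cball n (g : Vec n -> R) (c : Vec n) (rho : R) :
  Rle 0 rho -> cont_on (fun x => Rle (Defs.norm (vsub x c)) rho) g ->
  exists x, Rle (Defs.norm (vsub x c)) rho /\
    forall y, Rle (Defs.norm (vsub y c)) rho -> Rle (g y) (g x).
Proof.
move=> rho0 Hg.
pose A := [set v : 'rV[R]_n | Rle (Defs.norm (vsub (toV v) c)) rho].
have Hn1 : Rlt 0 (Rplus (INR n) 1) by have := pos_INR n; lra.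
have A0 : A !=set0.
  exists (\row_i c i); rewrite /A /= toV_row norm_self; exact: rho0.
have clA : closed A.
  move=> v Hv; rewrite /A /=; apply: Rnot_lt_le => Hlt.
  pose eta := Rminus (Defs.norm (vsub (toV v) c)) rho.
  have Heta : eta = Rminus (Defs.norm (vsub (toV v) c)) rho by [].
  have eta0 : Rlt 0 (Rdiv eta (Rplus (INR n) 1)).
    apply: Rdiv_lt_0_compat => //; rewrite /eta; lra.
  have /RltP eta1 := eta0.
  have [w [Aw Bw]] := Hv _ (nbhsx_ballx v _ eta1).
  have h1 := ball_norm Bw; move: Aw; rewrite /A /= => Aw.
  have h2 := norm_triang_sub (toV v) (toV w) c.
  rewrite norm_sym in h1.
  have h3 : Rlt (Rmult (INR n) (Rdiv eta (Rplus (INR n) 1))) eta.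
    have -> : Rmult (INR n) (Rdiv eta (Rplus (INR n) 1)) = Rminus eta (Rdiv eta (Rplus (INR n) 1)).
      by field; apply: Rlt_dichotomy_converse; right; lra.
    lra.
  lra.
have bA : bounded_set A.
  exists (Rplus rho (Defs.norm c)); split; first exact: num_real.
  move=> M HM v Av; apply: ltW; apply: le_lt_trans HM.
  rewrite [leLHS]/normr /= mx_normrE; apply/bigmax_leP; split.
    apply/RleP; have := norm_ge0 c; move: Av; rewrite /A /= => Av.
    have := norm_ge0 (vsub (toV v) c); rewrite -?R0E; lra.
  move=> [i j] _ /=; have -> : i = ord0 by apply/val_inj; rewrite /= (ord1 i).
  apply/RleP; rewrite -RabsE.
  move: Av; rewrite /A /= => Av.
  have h1 : Rle (Rabs (Rminus (v ord0 j) (c j))) (Defs.norm (vsub (toV v) c)).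
    exact: (coord_le_norm (vsub (toV v) c) j).
  have h2 := coord_le_norm c j.
  have := Rabs_triang (Rminus (v ord0 j) (c j)) (c j).
  have -> : Rplus (Rminus (v ord0 j) (c j)) (c j) = v ord0 j by ring.
  move=> h3; apply: (Rle_trans _ _ _ h3); apply: Rplus_le_compat; [exact: (Rle_trans _ _ _ h1 Av)|exact: h2].
have cA := bounded_closed_compact bA clA.
have cF : {within A, continuous (g \o @toV n)}.
  apply/subspace_continuousP => v Av.
  rewrite /from_subspace; apply/(@cvgrPdist_lt _ R^o) => e /RltP e0.
  have [d [d0 Hd]] := Hg (toV v) Av e e0.
  have dd : Rlt 0 (Rdiv d (Rplus (INR n) 1)) by apply: Rdiv_lt_0_compat.
  rewrite near_withinE; apply/nbhs_ballP; exists (Rdiv d (Rplus (INR n) 1)).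
    exact/RltP.
  move=> w Bw Aw; apply/RltP; rewrite -RabsE -RminusE /= Rabs_minus_sym.
  apply: Hd => //.
  apply: Rle_lt_trans (ball_norm Bw) _.
  have -> : Rmult (INR n) (Rdiv d (Rplus (INR n) 1)) = Rminus d (Rdiv d (Rplus (INR n) 1)).
    by field; apply: Rlt_dichotomy_converse; right; lra.
  lra.
have [v Av Hmax] := EVT_max_rV A0 cA cF.
move: Av; rewrite in_setE /A /= => Av.
exists (toV v); split => // y Hy.
apply/RleP; have := Hmax (\row_i y i); rewrite /= toV_row; apply.
by rewrite in_setE /A /= toV_row.
Qed.

End EVTmod.
Import EVTmod.

Lemma dpl_shift f c l : derivable_pt_lim (fun h => f (c + h)) 0 l -> derivable_pt_lim f c l.
Proof.
move=> H eps Heps; have [d Hd] := H eps Heps; exists d => h h0 hd.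
have := Hd h h0 hd; by rewrite Rplus_0_l Rplus_0_r.
Qed.

Lemma partial_line n (g : Vec n -> R) p k s l :
  derivable_pt_lim (fun t => g (vadd (vadd p (vscale s (ebasis k))) (vscale t (ebasis k)))) 0 l ->
  derivable_pt_lim (fun u => g (vadd p (vscale u (ebasis k)))) s l.
Proof.
move=> H; apply: dpl_shift.
have -> : (fun h => g (vadd p (vscale (s + h) (ebasis k)))) =
  (fun t => g (vadd (vadd p (vscale s (ebasis k))) (vscale t (ebasis k)))).
  apply: functional_extensionality => h; congr g.
  apply: functional_extensionality => j; rewrite /vadd /vscale; ring.
exact: H.
Qed.

Lemma abs_between s b : Rmin 0 b <= s <= Rmax 0 b -> Rabs s <= Rabs b.
Proof.
rewrite /Rmin /Rmax; case: (Rle_dec 0 b) => Hb [H1 H2]; split_Rabs; lra.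
Qed.

Section F1.
Variables (n : nat) (y v : Vec n).

Definition Pm (m : nat) (t : R) : Vec n :=
  fun j => y j + (if (j < m)%nat then t * v j else 0).

Lemma Pm_0 t : Pm 0 t = y.
Proof. apply: functional_extensionality => j; rewrite /Pm /=; ring. Qed.

Lemma Pm_n t : Pm n t = vadd y (vscale t v).
Proof. apply: functional_extensionality => j; rewrite /Pm ltn_ord /vadd /vscale; ring. Qed.

Lemma Pm_S (k : 'I_n) m t : nat_of_ord k = m ->
  Pm m.+1 t = vadd (Pm m t) (vscale (t * v k) (ebasis k)).
Proof.
move=> Hk; apply: functional_extensionality => j.
rewrite /Pm /vadd /vscale /ebasis /kdelta ltnS leq_eqVlt.
case: (boolP (k == j)) => [/eqP <-|Hkj].
  by rewrite Hk eqxx ltnn /=; ring.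
have -> : (nat_of_ord j == m) = false.
  apply/negbTE; apply/negP => /eqP Hj; move/eqP: Hkj; apply; apply: val_inj; rewrite /= Hk Hj.
  done.
by rewrite /=; ring.
Qed.

Lemma Pm_bound (k : 'I_n) m t s : nat_of_ord k = m -> Rabs s <= Rabs (t * v k) ->
  Defs.norm (vsub (vadd (Pm m t) (vscale s (ebasis k))) y) <= Rabs t * sumI (fun j => Rabs (v j)).
Proof.
move=> Hk Hs; apply: Rle_trans (norm_le_sumabs _) _.
rewrite -sumI_scal; apply: sumI_le => j.
rewrite /vsub /vadd /Pm /vscale /ebasis /kdelta.
have Ht := Rabs_pos t.
case: (boolP (k == j)) => [/eqP Hkj|Hkj].
  rewrite -Hkj Hk ltnn; rewrite Rabs_mult in Hs.
  have -> : y k + 0 + s * 1 - y k = s by ring. done.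
case: (j < m)%nat.
  have -> : y j + t * v j + s * 0 - y j = t * v j by ring.
  rewrite Rabs_mult; lra.
have -> : y j + 0 + s * 0 - y j = 0 by ring.
rewrite Rabs_R0; have := Rabs_pos (v j); nra.
Qed.

Definition Lm (Dg : 'I_n -> Vec n -> R) (m : nat) :=
  sumI (fun j => if (j < m)%nat then v j * Dg j y else 0).

Lemma Lm_0 Dg : Lm Dg 0 = 0.
Proof. rewrite /Lm; exact: sumI_0. Qed.

Lemma Lm_n Dg : Lm Dg n = sumI (fun j => v j * Dg j y).
Proof. rewrite /Lm; apply: sumI_ext => j; by rewrite ltn_ord. Qed.

Lemma Lm_S Dg (k : 'I_n) m : nat_of_ord k = m -> Lm Dg m.+1 = Lm Dg m + v k * Dg k y.
Proof.
move=> Hk; rewrite /Lm -(@sumI_kdelta_l _ (fun j => v j * Dg j y) k) -sumI_add.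
apply: sumI_ext => j; rewrite /kdelta ltnS leq_eqVlt.
case: (boolP (k == j)) => [/eqP <-|Hkj].
  by rewrite Hk eqxx ltnn /=; ring.
have -> : (nat_of_ord j == m) = false.
  apply/negbTE; apply/negP => /eqP Hj; move/eqP: Hkj; apply; apply: val_inj; rewrite /= Hk Hj.
  done.
by rewrite /=; ring.
Qed.

End F1.

Lemma F1_claim n (g : Vec n -> R) (Dg : 'I_n -> Vec n -> R) (y v : Vec n) r :
  0 < r ->
  (forall z, Defs.ball y r z -> forall i,
      derivable_pt_lim (fun t => g (vadd z (vscale t (ebasis i)))) 0 (Dg i z)) ->
  (forall i eps, 0 < eps -> exists d, 0 < d /\ forall z, Defs.ball y r z ->
      Defs.norm (vsub z y) < d -> Rabs (Dg i z - Dg i y) < eps) ->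
  forall m, (m <= n)%nat -> forall eps, 0 < eps -> exists d, 0 < d /\ forall t, Rabs t < d ->
    Rabs (g (Pm y v m t) - g y - t * Lm y v Dg m) <= eps * Rabs t.
Proof.
move=> r0 Hder Hcont; elim=> [|m IH] Hm eps e0.
  exists 1; split; first lra. move=> t _; rewrite Pm_0 Lm_0.
  have -> : g y - g y - t * 0 = 0 by ring.
  rewrite Rabs_R0; have := Rabs_pos t; nra.
have Hmn : (m < n)%nat by [].
pose k := Ordinal Hmn. have Hk : nat_of_ord k = m by [].
have [d1 [d10 H1]] := IH (ltnW Hmn) (eps/2) ltac:(lra).
pose S := sumI (fun j => Rabs (v j)).
have S0 : 0 <= S by apply: sumI_ge0 => j; exact: Rabs_pos.
have Hvk := Rabs_pos (v k).
have e2 : 0 < eps / (2 * (Rabs (v k) + 1)) by apply: Rdiv_lt_0_compat; lra.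
have [dc [dc0 Hc]] := Hcont k _ e2.
have Mpos : 0 < Rmin dc r by apply: Rmin_pos.
pose d := Rmin d1 (Rmin dc r / (S + 1)).
have dpos : 0 < d.
  apply: Rmin_pos => //; apply: Rdiv_lt_0_compat; lra.
exists d; split => // t Ht.
have Ht1 : Rabs t < d1 := Rlt_le_trans _ _ _ Ht (Rmin_l _ _).
have Htp := Rabs_pos t.
have Ht2 : Rabs t * S < Rmin dc r.
  have h := Rlt_le_trans _ _ _ Ht (Rmin_r _ _).
  have h2 : Rabs t * (S + 1) < Rmin dc r.
    have := Rmult_lt_compat_r (S+1) _ _ ltac:(lra) h.
    have -> : Rmin dc r / (S + 1) * (S + 1) = Rmin dc r.
      by field; apply: Rlt_dichotomy_converse; right; lra.
    done.
  nra.
have Hmin1 := Rmin_l dc r; have Hmin2 := Rmin_r dc r.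
pose b := t * v k.
pose f := fun s => g (vadd (Pm y v m t) (vscale s (ebasis k))).
pose df := fun s => Dg k (vadd (Pm y v m t) (vscale s (ebasis k))).
have Hin : forall s, Rmin 0 b <= s <= Rmax 0 b ->
    Defs.ball y r (vadd (Pm y v m t) (vscale s (ebasis k))) /\
    Defs.norm (vsub (vadd (Pm y v m t) (vscale s (ebasis k))) y) < dc.
  move=> s Hs; have := Pm_bound y Hk (abs_between Hs); fold S => h.
  rewrite /Defs.ball; lra.
have Hd : forall s, Rmin 0 b <= s <= Rmax 0 b -> derivable_pt_lim f s (df s).
  move=> s Hs; apply: partial_line; apply: Hder; exact: (Hin s Hs).1.
have [c [Hc1 Hc2]] := Derive.MVT_gen f 0 b df
  (fun s Hs => proj2 (Derive.is_derive_Reals _ _ _)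
     (Hd s (conj (Rlt_le _ _ (proj1 Hs)) (Rlt_le _ _ (proj2 Hs)))))
  (fun s Hs => derivable_continuous_pt _ _ (exist _ (df s) (Hd s Hs))).
have Efb : f b = g (Pm y v m.+1 t) by rewrite /f (Pm_S y v t Hk).
have Ef0 : f 0 = g (Pm y v m t).
  rewrite /f; congr g; apply: functional_extensionality => j; rewrite /vadd /vscale; ring.
rewrite (Lm_S y v Dg Hk) -Efb.
have HA := H1 t Ht1.
have HB : Rabs (df c - Dg k y) < eps / (2 * (Rabs (v k) + 1)).
  apply: Hc; [exact: (Hin c Hc1).1|exact: (Hin c Hc1).2].
have Ekey : f b - g y - t * (Lm y v Dg m + v k * Dg k y) =
   (g (Pm y v m t) - g y - t * Lm y v Dg m) + b * (df c - Dg k y).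
  rewrite -Ef0; have -> : f b = f 0 + (f b - f 0) by ring.
  rewrite Hc2 /b; ring.
rewrite Ekey; apply: Rle_trans (Rabs_triang _ _) _.
rewrite /b !Rabs_mult.
have He : Rabs (v k) * (eps / (2 * (Rabs (v k) + 1))) <= eps / 2.
  have -> : eps / 2 = (Rabs (v k) + 1) * (eps / (2 * (Rabs (v k) + 1))).
    by field; apply: Rlt_dichotomy_converse; right; lra.
  nra.
have HB' := Rabs_pos (df c - Dg k y).
have : Rabs (v k) * Rabs (df c - Dg k y) <= eps / 2 by nra.
nra.
Qed.

Lemma F1 n (g : Vec n -> R) (Dg : 'I_n -> Vec n -> R) (y v : Vec n) r :
  0 < r ->
  (forall z, Defs.ball y r z -> forall i,
      derivable_pt_lim (fun t => g (vadd z (vscale t (ebasis i)))) 0 (Dg i z)) ->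
  (forall i eps, 0 < eps -> exists d, 0 < d /\ forall z, Defs.ball y r z ->
      Defs.norm (vsub z y) < d -> Rabs (Dg i z - Dg i y) < eps) ->
  derivable_pt_lim (fun t => g (vadd y (vscale t v))) 0 (sumI (fun i => v i * Dg i y)).
Proof.
move=> r0 Hder Hcont eps e0.
have [d [d0 Hd]] := F1_claim v r0 Hder Hcont (leqnn n) (eps := eps / 2) ltac:(lra).
exists (mkposreal d d0) => h h0 hd /=.
have := Hd h hd; rewrite Pm_n Lm_n Rplus_0_l.
have -> : vadd y (vscale 0 v) = y.
  apply: functional_extensionality => j; rewrite /vadd /vscale; ring.
move=> H.
have hpos : 0 < Rabs h by apply: Rabs_pos_lt.
have -> : (g (vadd y (vscale h v)) - g y) / h - sumI (fun i => v i * Dg i y)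
   = (g (vadd y (vscale h v)) - g y - h * sumI (fun i => v i * Dg i y)) / h.
  by field.
rewrite /Rdiv Rabs_mult Rabs_Rinv //.
apply: (Rmult_lt_reg_r (Rabs h)) => //.
have -> : Rabs (g (vadd y (vscale h v)) - g y - h * sumI (fun i => v i * Dg i y)) * / Rabs h * Rabs h
  = Rabs (g (vadd y (vscale h v)) - g y - h * sumI (fun i => v i * Dg i y)).
  by field; apply: Rlt_dichotomy_converse; right; lra.
nra.
Qed.


Lemma dpl_sumI n (F : 'I_n -> R -> R) (l : 'I_n -> R) x :
  (forall i, derivable_pt_lim (F i) x (l i)) ->
  derivable_pt_lim (fun t => sumI (fun i => F i t)) x (sumI l).
Proof.
move=> H; rewrite /sumI; elim: (index_enum _) => [|a s IH].
  under [fun t => _]functional_extensionality => t do rewrite big_nil.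
  rewrite big_nil; exact: derivable_pt_lim_const.
under [fun t => _]functional_extensionality => t do rewrite big_cons.
rewrite big_cons; exact: derivable_pt_lim_plus (H a) IH.
Qed.

Lemma dpl_scal c f x l : derivable_pt_lim f x l -> derivable_pt_lim (fun t => c * f t) x (c * l).
Proof. move=> H; exact: (derivable_pt_lim_scal f c x l H). Qed.

Lemma vadd_0 n (x v : Vec n) : vadd x (vscale 0 v) = x.
Proof. apply: functional_extensionality => j; rewrite /vadd /vscale; ring. Qed.

Lemma cont_ball n (U : Vec n -> R) x r y :
  cont_on (Defs.ball x r) U -> Defs.ball x r y ->
  forall eps, 0 < eps -> exists d, 0 < d /\ forall z, Defs.ball y (r - Defs.norm (vsub y x)) z ->
      Defs.norm (vsub z y) < d -> Rabs (U z - U y) < eps.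
Proof.
move=> HU Hy eps e0; have [d [d0 Hd]] := HU y Hy eps e0.
exists d; split => // z Hz; apply: Hd; exact: ball_sub Hz.
Qed.

Lemma touch_min n (psi : Vec n -> R) Dpsi D2psi x r :
  0 < r -> C2_on (Defs.ball x r) psi Dpsi D2psi ->
  (forall y, Defs.ball x r y -> psi x <= psi y) ->
  (forall i, Dpsi i x = 0) /\
  (forall v, 0 <= sumI (fun i => v i * sumI (fun j => v j * D2psi i j x))).
Proof.
move=> r0 [HD1 [HD2 [Hc0 [Hc1 Hc2]]]] Hmin.
have Hx : Defs.ball x r x by rewrite /Defs.ball norm_self.
have grad0 : forall i, Dpsi i x = 0.
  move=> i.
  pose pr := exist (fun l => derivable_pt_abs (fun t => psi (vadd x (vscale t (ebasis i)))) 0 l)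
     (Dpsi i x) (HD1 x Hx i).
  have := @deriv_minimum _ (- r) r 0 pr ltac:(lra) r0.
  rewrite /derive_pt /pr /= vadd_0; apply => t Ht1 Ht2; apply: Hmin.
  rewrite /Defs.ball.
  have -> : vsub (vadd x (vscale t (ebasis i))) x = vscale t (ebasis i).
    apply: functional_extensionality => j; rewrite /vsub /vadd; ring.
  rewrite norm_scale.
  have -> : Defs.norm (ebasis i) = 1.
    rewrite /Defs.norm /norm2 (@sumI_ext _ _ (fun j => kdelta i j * 1)) ?sumI_kdelta_l ?sqrt_1 //.
    move=> j; rewrite /ebasis /kdelta; case: (i == j); ring.
  split_Rabs; lra.
split => // v.
pose Q := sumI (fun i => v i * sumI (fun j => v j * D2psi i j x)).
apply: Rnot_lt_le => HQ; fold Q in HQ.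
pose H := fun t => sumI (fun i => v i * Dpsi i (vadd x (vscale t v))).
have Nv := norm_ge0 v.
pose rho := r / (Defs.norm v + 1).
have rho0 : 0 < rho by apply: Rdiv_lt_0_compat; lra.
have Hin : forall t, Rabs t < rho -> Defs.ball x r (vadd x (vscale t v)).
  move=> t Ht; rewrite /Defs.ball.
  have -> : vsub (vadd x (vscale t v)) x = vscale t v.
    apply: functional_extensionality => j; rewrite /vsub /vadd; ring.
  rewrite norm_scale.
  have h : Rabs t * (Defs.norm v + 1) < r.
    have := Rmult_lt_compat_r (Defs.norm v + 1) _ _ ltac:(lra) Ht.
    rewrite /rho; have -> : r / (Defs.norm v + 1) * (Defs.norm v + 1) = r.
      by field; apply: Rlt_dichotomy_converse; right; lra.
    done.
  have := Rabs_pos t; nra.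
have Hh : forall t, Rabs t < rho -> derivable_pt_lim (fun s => psi (vadd x (vscale s v))) t (H t).
  move=> t Ht; apply: dpl_shift.
  have -> : (fun h => psi (vadd x (vscale (t + h) v))) =
            (fun h => psi (vadd (vadd x (vscale t v)) (vscale h v))).
    apply: functional_extensionality => h; congr psi.
    apply: functional_extensionality => j; rewrite /vadd /vscale; ring.
  have Hy := Hin t Ht.
  apply: (@F1 _ _ _ _ v (r - Defs.norm (vsub (vadd x (vscale t v)) x))).
  - rewrite /Defs.ball in Hy; lra.
  - move=> z Hz i; apply: HD1; exact: ball_sub Hz.
  - move=> i; exact: cont_ball (Hc1 i) Hy.
have HH : derivable_pt_lim H 0 Q.
  apply: dpl_sumI => i; apply: dpl_scal.
  apply: (@F1 _ _ _ _ v r) => //.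
  - move=> z Hz j; exact: HD2 z Hz i j.
  - move=> j eps e0; have := cont_ball (Hc2 i j) Hx e0; rewrite norm_self Rminus_0_r; done.
have H0 : H 0 = 0.
  rewrite /H vadd_0 (@sumI_ext _ _ (fun _ => 0)) ?sumI_0 // => i; rewrite grad0; ring.
have [d Hd] := HH (- Q / 2) ltac:(lra).
have Hneg : forall s, 0 < s -> s < d -> H s < 0.
  move=> s s0 sd; have := Hd s ltac:(lra) ltac:(rewrite Rabs_right; lra).
  rewrite Rplus_0_l H0 Rminus_0_r => h.
  have : H s / s < Q / 2 by split_Rabs; lra.
  move=> h2; have : H s = H s / s * s by field; lra.
  nra.
have dp := cond_pos d.
pose t := Rmin d rho / 2.
have t0 : 0 < t by rewrite /t; have := Rmin_pos _ _ dp rho0; lra.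
have tlt : t < Rmin d rho by rewrite /t; have := Rmin_pos _ _ dp rho0; lra.
have tl1 := Rlt_le_trans _ _ _ tlt (Rmin_l _ _).
have tl2 := Rlt_le_trans _ _ _ tlt (Rmin_r _ _).
have [c [Hc Hc']] := MVT_cor2 (fun s => psi (vadd x (vscale s v))) H 0 t t0
  (fun c Hc => Hh c ltac:(rewrite Rabs_right; lra)).
have := Hmin _ (Hin t ltac:(rewrite Rabs_right; lra)).
have := Hneg c ltac:(lra) ltac:(lra).
rewrite vadd_0 in Hc; nra.
Qed.

Module UinCalc.
From mathcomp Require Import all_boot.
From Stdlib Require Import Reals Lra FunctionalExtensionality.
From Coquelicot Require Import Coquelicot.
Open Scope R_scope.
Set Implicit Arguments. Unset Strict Implicit.

Lemma norm2_line n (x x0 : Vec n) j t :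
  norm2 (vsub (vadd x (vscale t (ebasis j))) x0) =
  norm2 (vsub x x0) + 2 * t * (x j - x0 j) + t * t.
Proof.
rewrite /norm2 /vsub /vadd /vscale /ebasis.
have E : forall k, (x k + t * kdelta j k - x0 k) * (x k + t * kdelta j k - x0 k) =
   (x k - x0 k) * (x k - x0 k) + kdelta j k * (2 * t * (x k - x0 k)) + kdelta j k * (t * t).
  move=> k; rewrite /kdelta; case: (j == k); ring.
rewrite (sumI_ext E) !sumI_add !sumI_kdelta_l; ring.
Qed.

Section U.
Variables (n : nat) (alpha Rad : R) (x0 : Vec n).
Definition wf (z : Vec n) := Rad * Rad - norm2 (vsub z x0).
Definition Fi (i : 'I_n) (z : Vec n) :=
  (INR n - 2) * u_in alpha Rad x0 z * (z i - x0 i) / wf z.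
Definition F2 (i j : 'I_n) (z : Vec n) :=
  (INR n - 2) * u_in alpha Rad x0 z *
    (kdelta i j / wf z + INR n * (z i - x0 i) * (z j - x0 j) / (wf z * wf z)).

Hypothesis Rad0 : 0 < Rad.

Lemma wf_pos z : Defs.ball x0 Rad z -> 0 < wf z.
Proof.
rewrite /Defs.ball /wf => H; have := norm_sq (vsub z x0); have := norm_ge0 (vsub z x0).
nra.
Qed.

Lemma du_formula x i : Defs.ball x0 Rad x ->
  derivable_pt_lim (fun t => u_in alpha Rad x0 (vadd x (vscale t (ebasis i)))) 0 (Fi i x).
Proof.
move=> Hx; have W0 := wf_pos Hx.
have -> : (fun t => u_in alpha Rad x0 (vadd x (vscale t (ebasis i)))) =
  (fun t => alpha * exp ((INR n - 2) / 2 * ln (Rad * / (Rad * Rad - (norm2 (vsub x x0) + 2 * t * (x i - x0 i) + t * t))))).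
  apply: functional_extensionality => t; by rewrite /u_in norm2_line /Rpower.
apply/is_derive_Reals.
rewrite /Fi /u_in /Rpower; move: W0; rewrite /wf => W0.
auto_derive.
  repeat split; [apply: Rlt_dichotomy_converse; right; lra|apply: Rmult_lt_0_compat => //; apply: Rinv_0_lt_compat; lra].
have E : Rad * Rad + - (norm2 (vsub x x0) + 2 * 0 * (x i - x0 i) + 0 * 0) = Rad * Rad - norm2 (vsub x x0) by ring.
rewrite E /Rdiv; set X := exp _.
field; split; apply: Rlt_dichotomy_converse; right; lra.
Qed.

Lemma d2u_formula x i j : Defs.ball x0 Rad x ->
  derivable_pt_lim (fun t => Fi i (vadd x (vscale t (ebasis j)))) 0 (F2 i j x).
Proof.
move=> Hx; have W0 := wf_pos Hx.
have -> : (fun t => Fi i (vadd x (vscale t (ebasis j)))) =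
  (fun t => (INR n - 2) * (alpha * exp ((INR n - 2) / 2 * ln (Rad * / (Rad * Rad - (norm2 (vsub x x0) + 2 * t * (x j - x0 j) + t * t))))) * (x i + t * kdelta j i - x0 i) * / (Rad * Rad - (norm2 (vsub x x0) + 2 * t * (x j - x0 j) + t * t))).
  apply: functional_extensionality => t; by rewrite /Fi /wf /u_in norm2_line /Rpower /Rdiv /vadd /vscale /ebasis.
apply/is_derive_Reals.
rewrite /F2 /u_in /Rpower kdelta_sym; move: W0; rewrite /wf => W0.
auto_derive.
  repeat split; [apply: Rlt_dichotomy_converse; right; lra|apply: Rmult_lt_0_compat => //; apply: Rinv_0_lt_compat; lra|apply: Rlt_dichotomy_converse; right; lra].
have E : Rad * Rad + - (norm2 (vsub x x0) + 2 * 0 * (x j - x0 j) + 0 * 0) = Rad * Rad - norm2 (vsub x x0) by ring.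
rewrite E /Rdiv; set X := exp _.
field; split; apply: Rlt_dichotomy_converse; right; lra.
Qed.
End U.

Lemma Rpower_pos x y : 0 < Rpower x y.
Proof. exact: exp_pos. Qed.

Lemma INR_ge3 n : (3 <= n)%nat -> 3 <= INR n.
Proof.
move=> H; have : (3 <= n)%coq_nat by apply/leP.
move/le_INR; by rewrite /= ; lra.
Qed.

Lemma uin_pos n alpha Rad (x0 x : Vec n) : 0 < alpha -> 0 < u_in alpha Rad x0 x.
Proof. move=> a0; rewrite /u_in; apply: Rmult_lt_0_compat => //; exact: Rpower_pos. Qed.

Lemma uin_hess_formula n alpha Rad (x0 x : Vec n) : (3 <= n)%nat -> 0 < alpha -> 0 < Rad ->
  Defs.ball x0 Rad x -> forall i j,
  neg_mx (conf_hess (u_in alpha Rad x0) (Fi alpha Rad x0) (F2 alpha Rad x0) x) i j =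
  2 * Rpower alpha (- (4 / (INR n - 2))) * kdelta i j.
Proof.
move=> Hn a0 R0 Hx i j.
have N3 := INR_ge3 Hn.
have W0 := wf_pos R0 Hx.
set N := INR n in N3 *.
have U0 := uin_pos Rad x0 x a0.
set U := u_in alpha Rad x0 x in U0.
set w := wf Rad x0 x in W0.
pose P := Rpower U (- (4 / (N - 2))).
have E1 : Rpower U (- ((N + 2) / (N - 2))) = P * / U.
  have -> : - ((N + 2) / (N - 2)) = - (4 / (N - 2)) + - (1).
    by field; apply: Rlt_dichotomy_converse; right; lra.
  by rewrite Rpower_plus (Rpower_Ropp U 1) Rpower_1.
have E2 : Rpower U (- (2 * N / (N - 2))) = P * / U * / U.
  have -> : - (2 * N / (N - 2)) = - (4 / (N - 2)) + - (1) + - (1).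
    by field; apply: Rlt_dichotomy_converse; right; lra.
  by rewrite !Rpower_plus (Rpower_Ropp U 1) Rpower_1.
have Q0 : 0 < Rad / w by apply: Rdiv_lt_0_compat.
have E3 : P = Rpower alpha (- (4 / (N - 2))) * (w / Rad) * (w / Rad).
  rewrite /P /U /u_in -Rpower_mult_distr //; last exact: Rpower_pos.
  rewrite Rpower_mult.
  have -> : (INR n - 2) / 2 * - (4 / (N - 2)) = - (INR 2).
    rewrite /N /=; field; apply: Rlt_dichotomy_converse; right; rewrite -/N; lra.
  have Ew : Rad * Rad - norm2 (vsub x x0) = w by [].
  rewrite Ew (Rpower_Ropp (Rad / w) (INR 2)) Rpower_pow //=.
  field; split; apply: Rlt_dichotomy_converse; right; lra.
have ES : sumI (fun k => Fi alpha Rad x0 k x * Fi alpha Rad x0 k x) =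
    (N - 2) * (N - 2) * U * U / (w * w) * norm2 (vsub x x0).
  rewrite /norm2 -sumI_scal; apply: sumI_ext => k; rewrite /Fi -/N -/U -/w /vsub.
  field; apply: Rlt_dichotomy_converse; right; lra.
have EA : norm2 (vsub x x0) = Rad * Rad - w by rewrite /w /wf; ring.
rewrite /neg_mx /conf_hess -/N -/U ES E1 E2 EA /F2 /Fi -/U -/w -/N.
rewrite E3; set d := kdelta i j; set a' := Rpower alpha _.
field; repeat split; apply: Rlt_dichotomy_converse; right; lra.
Qed.

Lemma dpl_cont f x l : derivable_pt_lim f x l ->
  forall eps, 0 < eps -> exists d, 0 < d /\ forall h, Rabs h < d -> Rabs (f (x + h) - f x) < eps.
Proof.
move=> H eps e0; have [d1 Hd1] := H 1 ltac:(lra).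
have dp := cond_pos d1.
have Hl := Rabs_pos l.
pose d := Rmin d1 (eps / (Rabs l + 2)).
have d0 : 0 < d by apply: Rmin_pos => //; apply: Rdiv_lt_0_compat; lra.
exists d; split => // h Hh.
case: (Req_dec h 0) => [->|hn].
  rewrite Rplus_0_r Rminus_diag_eq // Rabs_R0; lra.
have h1 : Rabs h < d1 := Rlt_le_trans _ _ _ Hh (Rmin_l _ _).
have h2 : Rabs h < eps / (Rabs l + 2) := Rlt_le_trans _ _ _ Hh (Rmin_r _ _).
have := Hd1 h hn h1.
have hp : 0 < Rabs h by apply: Rabs_pos_lt.
set q := (f (x + h) - f x) / h => Hq.
have Eq : f (x + h) - f x = q * h by rewrite /q; field.
rewrite Eq Rabs_mult.
have : Rabs q < Rabs l + 1.
  have := Rabs_triang (q - l) l; have -> : q - l + l = q by ring. lra.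
move=> hq.
have : Rabs h * (Rabs l + 2) < eps.
  have := Rmult_lt_compat_r (Rabs l + 2) _ _ ltac:(lra) h2.
  have -> : eps / (Rabs l + 2) * (Rabs l + 2) = eps.
    by field; apply: Rlt_dichotomy_converse; right; lra.
  done.
have := Rabs_pos q; nra.
Qed.

Lemma uin_radius_cont n alpha Rad (x0 x : Vec n) : 0 < Rad -> Defs.ball x0 Rad x ->
  forall eps, 0 < eps -> exists d, 0 < d /\ forall h, Rabs h < d ->
    Rabs (u_in alpha (Rad + h) x0 x - u_in alpha Rad x0 x) < eps.
Proof.
move=> R0 Hx; have W0 := wf_pos R0 Hx; move: W0; rewrite /wf => W0.
set A := norm2 (vsub x x0) in W0.
have [l Hl] : ex_derive (fun r => alpha * exp ((INR n - 2) / 2 * ln (r * / (r * r - A)))) Rad.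
  auto_derive; repeat split.
    apply: Rlt_dichotomy_converse; right; lra.
  apply: Rmult_lt_0_compat => //; apply: Rinv_0_lt_compat; lra.
move/is_derive_Reals: Hl => Hl eps e0.
have [d [d0 Hd]] := dpl_cont Hl e0.
exists d; split => // h Hh; exact: Hd.
Qed.

End UinCalc.
Import UinCalc.

Ltac nz := apply: Rlt_dichotomy_converse; first [right; lra | left; lra | right; nra | left; nra].

Lemma cont_on_sub n (U V : Vec n -> Prop) g : cont_on U g -> (forall z, V z -> U z) -> cont_on V g.
Proof.
move=> H HV x Vx eps e0; have [d [d0 Hd]] := H x (HV x Vx) eps e0.
exists d; split => // y Vy; apply: Hd; exact: HV.
Qed.

Lemma cont_on_scale n (U : Vec n -> Prop) g t : cont_on U g -> cont_on U (fun z => t * g z).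
Proof.
move=> H x Ux eps e0.
have Ht := Rabs_pos t.
have [d [d0 Hd]] := H x Ux (eps / (Rabs t + 1)) ltac:(apply: Rdiv_lt_0_compat; lra).
exists d; split => // y Uy Hy.
have := Hd y Uy Hy => h.
have -> : t * g y - t * g x = t * (g y - g x) by ring.
rewrite Rabs_mult.
have : Rabs t * Rabs (g y - g x) <= Rabs t * (eps / (Rabs t + 1)).
  apply: Rmult_le_compat_l => //; lra.
have : Rabs t * (eps / (Rabs t + 1)) < eps.
  have -> : Rabs t * (eps / (Rabs t + 1)) = eps - eps / (Rabs t + 1) by field; nz.
  have : 0 < eps / (Rabs t + 1) by apply: Rdiv_lt_0_compat; lra.
  lra.
lra.
Qed.

Lemma cont_on_minus n (U : Vec n -> Prop) g h : cont_on U g -> cont_on U h ->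
  cont_on U (fun z => g z - h z).
Proof.
move=> Hg Hh x Ux eps e0.
have [d1 [d10 Hd1]] := Hg x Ux (eps / 2) ltac:(lra).
have [d2 [d20 Hd2]] := Hh x Ux (eps / 2) ltac:(lra).
exists (Rmin d1 d2); split; first exact: Rmin_pos.
move=> y Uy Hy.
have := Hd1 y Uy (Rlt_le_trans _ _ _ Hy (Rmin_l _ _)).
have := Hd2 y Uy (Rlt_le_trans _ _ _ Hy (Rmin_r _ _)).
have := Rabs_triang (g y - g x) (- (h y - h x)); rewrite Rabs_Ropp.
have -> : g y - g x + - (h y - h x) = g y - h y - (g x - h x) by ring.
lra.
Qed.

Lemma cont_on_div n (U : Vec n -> Prop) g h : cont_on U g -> cont_on U h ->
  (forall z, U z -> 0 < h z) -> cont_on U (fun z => g z / h z).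
Proof.
move=> Hg Hh Hpos x Ux eps e0.
have b0 := Hpos x Ux; set b := h x in b0.
have Hgx := Rabs_pos (g x).
have e1 : 0 < eps * b / 4 by apply: Rdiv_lt_0_compat; [nra|lra].
have e2 : 0 < Rmin (b / 2) (eps * (b * b) / (4 * (Rabs (g x) + 1))).
  apply: Rmin_pos; [lra|apply: Rdiv_lt_0_compat; [nra|lra]].
have [d1 [d10 Hd1]] := Hg x Ux _ e1.
have [d2 [d20 Hd2]] := Hh x Ux _ e2.
exists (Rmin d1 d2); split; first exact: Rmin_pos.
move=> y Uy Hy.
have G := Hd1 y Uy (Rlt_le_trans _ _ _ Hy (Rmin_l _ _)).
have H := Hd2 y Uy (Rlt_le_trans _ _ _ Hy (Rmin_r _ _)).
have H1 := Rlt_le_trans _ _ _ H (Rmin_l _ _).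
have H2 := Rlt_le_trans _ _ _ H (Rmin_r _ _).
have hy : b / 2 < h y by move: H1; rewrite -/b; split_Rabs; lra.
have hy0 : 0 < h y by lra.
have -> : g y / h y - g x / b = ((g y - g x) * b - g x * (h y - b)) / (h y * b).
  by field; split; nz.
rewrite /Rdiv Rabs_mult Rabs_Rinv; last by nz.
rewrite (Rabs_right (h y * b)); last by nra.
have Hnum : Rabs ((g y - g x) * b - g x * (h y - b)) <= eps * b / 4 * b + Rabs (g x) * (eps * (b * b) / (4 * (Rabs (g x) + 1))).
  apply: Rle_trans (Rabs_triang _ _) _; rewrite Rabs_Ropp !Rabs_mult (Rabs_right b); last lra.
  apply: Rplus_le_compat.
    apply: Rmult_le_compat_r; lra.
  apply: Rmult_le_compat_l => //; rewrite -/b in H2; lra.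
have Hq : Rabs (g x) * (eps * (b * b) / (4 * (Rabs (g x) + 1))) <= eps * (b * b) / 4.
  have -> : eps * (b * b) / 4 = (Rabs (g x) + 1) * (eps * (b * b) / (4 * (Rabs (g x) + 1))).
    by field; nz.
  have : 0 <= eps * (b * b) / (4 * (Rabs (g x) + 1)) by apply: Rlt_le; apply: Rdiv_lt_0_compat; [nra|lra].
  nra.
have hb : 0 < h y * b by nra.
apply: (Rmult_lt_reg_r (h y * b)) => //.
rewrite Rmult_assoc Rinv_l; last by nz.
rewrite Rmult_1_r.
have : eps * b / 4 * b + eps * (b * b) / 4 = eps * (b * b) / 2 by field.
have : eps * (b * b) / 2 < eps * (h y * b) by nra.
nra.
Qed.

Lemma C2_scale_sub n (U V : Vec n -> Prop) g Dg D2g t :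
  C2_on U g Dg D2g -> (forall z, V z -> U z) ->
  C2_on V (fun z => t * g z) (fun i z => t * Dg i z) (fun i j z => t * D2g i j z).
Proof.
move=> [H1 [H2 [H3 [H4 H5]]]] HV; split; [|split; [|split; [|split]]].
- move=> x Vx i; exact: (derivable_pt_lim_scal _ t 0 _ (H1 x (HV x Vx) i)).
- move=> x Vx i j; exact: (derivable_pt_lim_scal _ t 0 _ (H2 x (HV x Vx) i j)).
- apply: cont_on_scale; exact: cont_on_sub H3 HV.
- move=> i; apply: cont_on_scale; exact: cont_on_sub (H4 i) HV.
- move=> i j; apply: cont_on_scale; exact: cont_on_sub (H5 i j) HV.
Qed.

Lemma C2_minus_sub n (U V : Vec n -> Prop) g Dg D2g h Dh D2h :
  C2_on U g Dg D2g -> C2_on V h Dh D2h -> (forall z, V z -> U z) ->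
  C2_on V (fun z => h z - g z) (fun i z => Dh i z - Dg i z) (fun i j z => D2h i j z - D2g i j z).
Proof.
move=> [G1 [G2 [G3 [G4 G5]]]] [H1 [H2 [H3 [H4 H5]]]] HV; split; [|split; [|split; [|split]]].
- move=> x Vx i; exact: (derivable_pt_lim_minus _ _ 0 _ _ (H1 x Vx i) (G1 x (HV x Vx) i)).
- move=> x Vx i j; exact: (derivable_pt_lim_minus _ _ 0 _ _ (H2 x Vx i j) (G2 x (HV x Vx) i j)).
- apply: cont_on_minus => //; exact: cont_on_sub G3 HV.
- move=> i; apply: cont_on_minus => //; exact: cont_on_sub (G4 i) HV.
- move=> i j; apply: cont_on_minus => //; exact: cont_on_sub (G5 i j) HV.
Qed.

Lemma eig_scalar n (M : 'I_n -> 'I_n -> R) c :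
  (forall i j, M i j = c * kdelta i j) -> eigvals M (fun _ => c).
Proof.
move=> HM; exists (fun i j => kdelta i j); split.
  move=> i j; rewrite -(@sumI_kdelta_l _ (fun k => kdelta k j) i).
  apply: sumI_ext => k; by rewrite kdelta_sym.
move=> i j.
rewrite (@sumI_ext _ _ (fun k => kdelta i k * M k j)).
  by rewrite sumI_kdelta_l HM; ring.
move=> k; rewrite (@sumI_kdelta_r _ (fun l => kdelta k i * M k l) j).
by rewrite kdelta_sym.
Qed.

Definition qf n (H : 'I_n -> 'I_n -> R) (v : Vec n) :=
  sumI (fun k => v k * sumI (fun l => v l * H k l)).

Lemma eig_qf n (M H : 'I_n -> 'I_n -> R) c mu :
  eigvals M mu -> (forall k l, M k l = c * kdelta k l + H k l) ->
  forall i, exists v : Vec n, mu i = c + qf H v.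
Proof.
move=> [Q [HQ1 HQ2]] HM i; exists (fun k => Q k i).
have := HQ2 i i; rewrite kdelta_ii Rmult_1_l => <-.
rewrite /qf -(Rmult_1_r c) -(kdelta_ii i) -HQ1 -sumI_scal -sumI_add.
apply: sumI_ext => k.
rewrite (@sumI_ext _ _ (fun l => kdelta k l * (c * Q k i * Q l i) + Q k i * (Q l i * H k l))).
  by rewrite sumI_add (@sumI_kdelta_l _ (fun l => c * Q k i * Q l i) k) (@sumI_scal _ (Q k i) (fun l => Q l i * H k l)); ring.
move=> l; rewrite HM; ring.
Qed.

Lemma Rp_lt1 a p : 0 < a < 1 -> 0 < p -> Rpower a p < 1.
Proof.
move=> [a0 a1] p0; rewrite /Rpower -exp_0; apply: exp_increasing.
have := ln_increasing _ _ a0 a1; rewrite ln_1 => h; nra.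
Qed.

Lemma Rp_gt1 a p : 1 < a -> 0 < p -> 1 < Rpower a p.
Proof.
move=> a1 p0; rewrite /Rpower -exp_0; apply: exp_increasing.
have := ln_increasing _ _ Rlt_0_1 a1; rewrite ln_1 => h; nra.
Qed.

Lemma Rp_inv a p : 0 < a -> 0 < p -> Rpower (Rpower a (/ p)) p = a.
Proof.
move=> a0 p0; rewrite Rpower_mult Rinv_l ?Rpower_1 //; nz.
Qed.

Lemma Rp_neg_lt1 t e : 1 < t -> 0 < e -> Rpower t (- e) < 1.
Proof.
move=> t1 e0; rewrite Rpower_Ropp; have := Rp_gt1 t1 e0 => h.
rewrite -Rinv_1; apply: Rinv_lt_contravar; lra.
Qed.

Lemma Rp_neg_gt1 t e : 0 < t < 1 -> 0 < e -> 1 < Rpower t (- e).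
Proof.
move=> t1 e0; rewrite Rpower_Ropp; have := Rp_lt1 t1 e0 => h.
have : 0 < Rpower t e := exp_pos _.
rewrite -Rinv_1; move=> hp; apply: Rinv_lt_contravar; lra.
Qed.

Section FLemmas.
Variables (n : nat) (Gam : Vec n -> Prop) (f : Vec n -> R).
Hypothesis Hs : structural Gam f.

Lemma closure_of mu : Gam mu -> Defs.closure Gam mu.
Proof. move=> H eps e0; exists mu; split => //; rewrite norm_self; lra. Qed.

Lemma Gam_of_f1 mu : Defs.closure Gam mu -> f mu = 1 -> Gam mu.
Proof.
move=> Hc Hf; case: (classic (Gam mu)) => // H.
have := f_bdry Hs Hc H; lra.
Qed.

Lemma f_sub c mu : Gam (fun _ => c) -> f (fun _ => c) = 1 -> 0 < c ->
  (forall i, c <= mu i) -> Defs.closure Gam mu /\ 1 <= f mu.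
Proof.
move=> HG Hf c0 Hmu.
have [p [p0 Hp]] := f_homog Hs.
have key : forall s, 0 < s < 1 -> Gam mu /\ Rpower s p <= f mu.
  move=> s [s0 s1].
  have E : mu = vadd (vscale s (fun _ => c)) (fun i => mu i - s * c).
    apply: functional_extensionality => i; rewrite /vadd /vscale; ring.
  have Hpos : Gamma_n (fun i => mu i - s * c).
    move=> i; have := Hmu i; nra.
  have Hgs := Gam_cone Hs HG s0.
  split; first by rewrite {1}E; exact: (Gam_add Hs Hgs Hpos).
  have := f_mono Hs Hgs Hpos; rewrite -E Hp // ?Hf; first lra.
  exact: closure_of.
have [Gmu _] := key (1/2) ltac:(lra).
split; first exact: closure_of.
apply: Rnot_lt_le => Hlt.
have fpos := f_pos Hs Gmu.
pose a := (f mu + 1) / 2.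
have a01 : 0 < a < 1 by rewrite /a; lra.
have ip : 0 < / p by apply: Rinv_0_lt_compat.
have s01 : 0 < Rpower a (/ p) < 1.
  split; [exact: exp_pos|exact: Rp_lt1].
have [_ h] := key _ s01.
rewrite Rp_inv in h; [rewrite /a in h; lra|lra|done].
Qed.

Lemma f_super c mu : Gam (fun _ => c) -> f (fun _ => c) = 1 -> 0 < c ->
  (forall i, mu i <= c) -> ~ Defs.closure Gam mu \/ f mu <= 1.
Proof.
move=> HG Hf c0 Hmu.
case: (classic (Defs.closure Gam mu)) => Hc; last by left.
right; case: (classic (Gam mu)) => Gmu; last by rewrite (f_bdry Hs Hc Gmu); lra.
have [p [p0 Hp]] := f_homog Hs.
apply: Rnot_lt_le => Hlt.
pose a := (f mu + 1) / 2.
have a1 : 1 < a by rewrite /a; lra.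
have ip : 0 < / p by apply: Rinv_0_lt_compat.
set s := Rpower a (/ p).
have s1 : 1 < s by exact: Rp_gt1.
have E : vscale s (fun _ => c) = vadd mu (fun i => s * c - mu i).
  apply: functional_extensionality => i; rewrite /vadd /vscale; ring.
have Hpos : Gamma_n (fun i => s * c - mu i).
  move=> i; have := Hmu i; nra.
have := f_mono Hs Gmu Hpos; rewrite -E Hp; last lra; last exact: closure_of.
rewrite Hf Rp_inv; [rewrite /a; lra|lra|done].
Qed.

Lemma f_scale_lt1 c s : Gam (fun _ => c) -> f (fun _ => c) = 1 -> 0 < s < 1 ->
  f (fun _ => s * c) < 1.
Proof.
move=> HG Hf [s0 s1]; have [p [p0 Hp]] := f_homog Hs.
have -> : (fun _ : 'I_n => s * c) = vscale s (fun _ => c) by [].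
rewrite Hp // ?Hf; last exact: closure_of.
have := Rp_lt1 (conj s0 s1) p0; lra.
Qed.

Lemma f_scale_gt1 c s : Gam (fun _ => c) -> f (fun _ => c) = 1 -> 1 < s ->
  Gam (fun _ => s * c) /\ 1 < f (fun _ => s * c).
Proof.
move=> HG Hf s1; have [p [p0 Hp]] := f_homog Hs.
have -> : (fun _ : 'I_n => s * c) = vscale s (fun _ => c) by [].
split; first by apply: (Gam_cone Hs HG); lra.
rewrite Hp; [|exact: closure_of|lra]. rewrite Hf.
have := Rp_gt1 s1 p0; lra.
Qed.
End FLemmas.


Lemma norm_ebasis n (j : 'I_n) : Defs.norm (ebasis j) = 1.
Proof.
rewrite /Defs.norm /norm2 (@sumI_ext _ _ (fun k => kdelta j k * 1)) ?sumI_kdelta_l ?sqrt_1 //.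
move=> k; rewrite /ebasis /kdelta; case: (j == k); ring.
Qed.

Lemma line_norm n (x c : Vec n) j t :
  Defs.norm (vsub (vadd x (vscale t (ebasis j))) c) <= Defs.norm (vsub x c) + Rabs t.
Proof.
have -> : vsub (vadd x (vscale t (ebasis j))) c = vadd (vsub x c) (vscale t (ebasis j)).
  apply: functional_extensionality => k; rewrite /vsub /vadd; ring.
apply: Rle_trans (norm_triang _ _) _; rewrite norm_scale norm_ebasis; lra.
Qed.

Lemma dpl_local f g l : derivable_pt_lim f 0 l ->
  (exists d, 0 < d /\ forall t, Rabs t < d -> g t = f t) -> derivable_pt_lim g 0 l.
Proof.
move=> H [d [d0 Hd]] eps e0; have [d1 Hd1] := H eps e0.
have dp := cond_pos d1.
exists (mkposreal _ (Rmin_pos _ _ dp d0)) => h hn /= hd.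
rewrite !Hd; first (apply: Hd1 => //; exact: Rlt_le_trans hd (Rmin_l _ _)).
  rewrite Rabs_R0; lra.
rewrite Rplus_0_l; exact: Rlt_le_trans hd (Rmin_r _ _).
Qed.

Lemma Rp_e1 N U : 2 < N -> 0 < U ->
  Rpower U (- ((N + 2) / (N - 2))) = Rpower U (- (4 / (N - 2))) * / U.
Proof.
move=> N2 U0; have -> : - ((N + 2) / (N - 2)) = - (4 / (N - 2)) + - (1) by field; nz.
by rewrite Rpower_plus (Rpower_Ropp U 1) Rpower_1.
Qed.

Lemma Rp_e2 N U : 2 < N -> 0 < U ->
  Rpower U (- (2 * N / (N - 2))) = Rpower U (- (4 / (N - 2))) * / U * / U.
Proof.
move=> N2 U0; have -> : - (2 * N / (N - 2)) = - (4 / (N - 2)) + - (1) + - (1) by field; nz.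
by rewrite !Rpower_plus (Rpower_Ropp U 1) Rpower_1.
Qed.

Lemma conf_hess_scale n g Dg D2g (x : Vec n) t i j : (3 <= n)%nat -> 0 < t -> 0 < g x ->
  conf_hess (fun z => t * g z) (fun i z => t * Dg i z) (fun i j z => t * D2g i j z) x i j =
  Rpower t (- (4 / (INR n - 2))) * conf_hess g Dg D2g x i j.
Proof.
move=> Hn t0 g0; have N3 := INR_ge3 Hn.
rewrite /conf_hess /=.
have tg : 0 < t * g x by nra.
have N2 : 2 < INR n by lra.
rewrite (Rp_e1 N2 tg) (Rp_e1 N2 g0) (Rp_e2 N2 tg) (Rp_e2 N2 g0) -!Rpower_mult_distr //.
rewrite (@sumI_ext _ _ (fun k => (t * t) * (Dg k x * Dg k x))); last by move=> k; ring.
rewrite sumI_scal.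
set a := Rpower t _; set b := Rpower (g x) _.
field; repeat split; nz.
Qed.

Section Hess.
Variables (n : nat) (alpha : R).
Hypothesis Hn : (3 <= n)%nat.
Hypothesis a0 : 0 < alpha.

Definition cst := 2 * Rpower alpha (- (4 / (INR n - 2))).

Lemma cst_pos : 0 < cst.
Proof. rewrite /cst; have := exp_pos (- (4 / (INR n - 2)) * ln alpha); rewrite /Rpower; lra. Qed.

Lemma hyp_hess R1 (y0 : Vec n) Du D2u x : 0 < R1 ->
  C2_on (Defs.ball y0 R1) (u_in alpha R1 y0) Du D2u -> Defs.ball y0 R1 x ->
  forall i j, neg_mx (conf_hess (u_in alpha R1 y0) Du D2u x) i j = cst * kdelta i j.
Proof.
move=> R0 [C1 [C2 _]] Hx i j.
have EDu : forall z, Defs.ball y0 R1 z -> forall i, Du i z = Fi alpha R1 y0 i z.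
  move=> z Hz k; exact: uniqueness_limite (C1 z Hz k) (du_formula alpha R0 k Hz).
have ED2 : forall k l, D2u k l x = F2 alpha R1 y0 k l x.
  move=> k l; apply: (@uniqueness_limite _ _ _ _ (C2 x Hx k l)).
  apply: dpl_local (d2u_formula alpha R0 k l Hx) _.
  exists (R1 - Defs.norm (vsub x y0)); split; first by rewrite /Defs.ball in Hx; lra.
  move=> t Ht; apply: EDu; rewrite /Defs.ball.
  have := line_norm x y0 l t; lra.
rewrite -(uin_hess_formula Hn a0 R0 Hx) /neg_mx /conf_hess /= !EDu // ED2.
by rewrite (@sumI_ext _ _ (fun k => Fi alpha R1 y0 k x * Fi alpha R1 y0 k x)) // => k; rewrite EDu.
Qed.
End Hess.


Lemma C2_sub n (U V : Vec n -> Prop) g Dg D2g :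
  C2_on U g Dg D2g -> (forall z, V z -> U z) -> C2_on V g Dg D2g.
Proof.
move=> [H1 [H2 [H3 [H4 H5]]]] HV; split; [|split; [|split; [|split]]].
- move=> x Vx; exact: H1 (HV x Vx).
- move=> x Vx; exact: H2 (HV x Vx).
- exact: cont_on_sub H3 HV.
- move=> i; exact: cont_on_sub (H4 i) HV.
- move=> i j; exact: cont_on_sub (H5 i j) HV.
Qed.

Lemma hess_diff n g Dg D2g h Dh D2h (x : Vec n) k l :
  g x = h x -> (forall i, Dg i x = Dh i x) ->
  neg_mx (conf_hess g Dg D2g x) k l =
  neg_mx (conf_hess h Dh D2h x) k l +
  (2 / (INR n - 2)) * Rpower (h x) (- ((INR n + 2) / (INR n - 2))) * (D2g k l x - D2h k l x).
Proof.
move=> Eg ED; rewrite /neg_mx /conf_hess /= Eg !ED.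
rewrite (@sumI_ext _ (fun k => Dg k x * Dg k x) (fun k => Dh k x * Dh k x)); last by move=> i; rewrite ED.
ring.
Qed.

Lemma qf_scale n (A : 'I_n -> 'I_n -> R) kap v : qf (fun k l => kap * A k l) v = kap * qf A v.
Proof.
rewrite /qf -sumI_scal; apply: sumI_ext => k.
have -> : sumI (fun l => v l * (kap * A k l)) = kap * sumI (fun l => v l * A k l).
  rewrite -sumI_scal; apply: sumI_ext => l; ring.
ring.
Qed.

Lemma Rpower_lt_base a b p : 0 < a -> a < b -> 0 < p -> Rpower a p < Rpower b p.
Proof.
move=> a0 ab p0; rewrite /Rpower; apply: exp_increasing.
have := ln_increasing _ _ a0 ab; nra.
Qed.

Lemma Rpower_le_base a b p : 0 < a -> a <= b -> 0 < p -> Rpower a p <= Rpower b p.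
Proof.
move=> a0 ab p0; case: (Rle_lt_or_eq_dec _ _ ab) => h.
  apply: Rlt_le; exact: Rpower_lt_base.
rewrite h; lra.
Qed.

Lemma norm2_lt n (x c : Vec n) r : 0 < r -> Defs.ball c r x -> norm2 (vsub x c) < r * r.
Proof.
rewrite /Defs.ball => r0 H; rewrite -norm_sq; have := norm_ge0 (vsub x c); nra.
Qed.

Lemma blowup_uin n alpha R1 (y0 : Vec n) : (3 <= n)%nat -> 0 < alpha -> 0 < R1 ->
  blows_up_at_bdry y0 R1 (u_in alpha R1 y0).
Proof.
move=> Hn a0 R0 M.
have N3 := INR_ge3 Hn.
have k0 : 0 < (INR n - 2) / 2 by lra.
pose K := Rmax (M / alpha) 1.
have K0 : 0 < K by have := Rmax_r (M / alpha) 1; rewrite -/K; lra.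
pose B := Rpower K (/ ((INR n - 2) / 2)).
have B0 : 0 < B := exp_pos _.
exists (/ (2 * (B + 1))); split; first by apply: Rinv_0_lt_compat; lra.
move=> x Hx Hd.
set d := Defs.norm (vsub x y0) in Hd.
have d0 : 0 <= d := norm_ge0 _.
have dR : d < R1 by exact: Hx.
have Ew : R1 * R1 - norm2 (vsub x y0) = (R1 - d) * (R1 + d) by rewrite -norm_sq /d; ring.
have w0 : 0 < (R1 - d) * (R1 + d) by nra.
have Hq : B < R1 / (R1 * R1 - norm2 (vsub x y0)).
  rewrite Ew.
  have h1 : (R1 - d) * (R1 + d) < / (2 * (B + 1)) * (2 * R1) by nra.
  apply: (Rmult_lt_reg_r ((R1 - d) * (R1 + d))) => //.
  have -> : R1 / ((R1 - d) * (R1 + d)) * ((R1 - d) * (R1 + d)) = R1 by field; split; nz.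
  have h2 : / (2 * (B + 1)) * (2 * R1) = R1 / (B + 1) by field; nz.
  rewrite h2 in h1.
  have : B * ((R1 - d) * (R1 + d)) < (B + 1) * ((R1 - d) * (R1 + d)) by nra.
  have : (B + 1) * (R1 / (B + 1)) = R1 by field; nz.
  nra.
have HK : K < Rpower (R1 / (R1 * R1 - norm2 (vsub x y0))) ((INR n - 2) / 2).
  have := Rpower_lt_base B0 Hq k0; rewrite /B Rp_inv //.
have := Rmax_l (M / alpha) 1; rewrite -/K => h.
rewrite /u_in.
have : M / alpha * alpha = M by field; nz.
nra.
Qed.


Section Main.
Variables (n : nat) (Gam : Vec n -> Prop) (f : Vec n -> R) (alpha : R).
Hypotheses (Hn : (3 <= n)%nat) (Hs : structural Gam f) (a0 : 0 < alpha).
Hypothesis Hcl : forall (R1 : R) (y0 : Vec n), 0 < R1 ->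
     classical_solution Gam f (Defs.ball y0 R1) (u_in alpha R1 y0) /\
     classical_solution Gam f (outside_cball y0 R1) (u_out alpha R1 y0).

Lemma C2_of R1 (y0 : Vec n) : 0 < R1 -> exists Du D2u, C2_on (Defs.ball y0 R1) (u_in alpha R1 y0) Du D2u.
Proof.
move=> R0; have [_ [Du [D2u [HC _]]]] := (Hcl y0 R0).1; by exists Du, D2u.
Qed.

Lemma const_facts : Gam (fun _ => cst n alpha) /\ f (fun _ => cst n alpha) = 1.
Proof.
have R0 : 0 < 1 by lra.
pose y0 : Vec n := fun _ => 0.
have [_ [Du [D2u [HC Heig]]]] := (Hcl y0 R0).1.
have Hx0 : Defs.ball y0 1 y0 by rewrite /Defs.ball norm_self; lra.
have [Hc Hf] := Heig y0 Hx0 _ (eig_scalar (hyp_hess Hn a0 R0 HC Hx0)).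
split => //; move: (Gam_of_f1 Hs Hc Hf) => H; exact: H.
Qed.

Lemma N2 : 2 < INR n.
Proof. have := INR_ge3 Hn; lra. Qed.

Lemma e4_pos : 0 < 4 / (INR n - 2).
Proof. have := N2; move=> h; apply: Rdiv_lt_0_compat; lra. Qed.

Lemma scaled_eig R1 (y0 : Vec n) Du D2u x t : 0 < R1 -> C2_on (Defs.ball y0 R1) (u_in alpha R1 y0) Du D2u ->
  Defs.ball y0 R1 x -> 0 < t ->
  eigvals (neg_mx (conf_hess (fun z => t * u_in alpha R1 y0 z) (fun i z => t * Du i z)
      (fun i j z => t * D2u i j z) x)) (fun _ => Rpower t (- (4 / (INR n - 2))) * cst n alpha).
Proof.
move=> R0 HC Hx t0; apply: eig_scalar => i j.
rewrite /neg_mx conf_hess_scale //; last exact: uin_pos.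
have := hyp_hess Hn a0 R0 HC Hx i j; rewrite /neg_mx => h.
have -> : - (Rpower t (- (4 / (INR n - 2))) * conf_hess (u_in alpha R1 y0) Du D2u x i j) =
   Rpower t (- (4 / (INR n - 2))) * - conf_hess (u_in alpha R1 y0) Du D2u x i j by ring.
rewrite h; ring.
Qed.

Lemma cmp_upper Rad (x0 : Vec n) u r :
  0 < r -> r < Rad -> cont_on (Defs.ball x0 Rad) u -> visc_sub Gam f (Defs.ball x0 Rad) u ->
  (forall x, Defs.ball x0 Rad x -> 0 < u x) ->
  forall y, Defs.ball x0 r y -> u y <= u_in alpha r x0 y.
Proof.
move=> r0 rR Hc Hsub Hpos y Hy; apply: Rnot_lt_le => Hlt.
have [Du [D2u HC]] := C2_of x0 r0.
have [HG Hf] := const_facts.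
have sub_r : forall z, Defs.norm (vsub z x0) <= r -> Defs.ball x0 Rad z.
  move=> z hz; rewrite /Defs.ball; lra.
have [xm [Hxm HM]] := EVT_cball (Rlt_le _ _ r0) (cont_on_sub Hc sub_r).
set M := u xm in HM.
have [d [d0 Hd]] := blowup_uin x0 Hn a0 r0 M.
set dy := Defs.norm (vsub y x0).
have dy0 : 0 <= dy := norm_ge0 _.
have dyr : dy < r by exact: Hy.
pose rho := Rmax (r - d / 2) ((dy + r) / 2).
have rho1 : dy < rho by have := Rmax_r (r - d / 2) ((dy + r) / 2); rewrite -/rho; lra.
have rho2 : rho < r by rewrite /rho; apply: Rmax_lub_lt; lra.
have rho3 : r - rho < d by have := Rmax_l (r - d / 2) ((dy + r) / 2); rewrite -/rho; lra.
have sub_rho : forall z, Defs.norm (vsub z x0) <= rho -> Defs.ball x0 r z.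
  move=> z hz; rewrite /Defs.ball; lra.
have Hphi : cont_on (fun z => Defs.norm (vsub z x0) <= rho) (fun z => u z / u_in alpha r x0 z).
  apply: cont_on_div.
  - apply: cont_on_sub Hc _ => z hz; rewrite /Defs.ball; lra.
  - have [_ [_ [Hcu _]]] := HC; exact: cont_on_sub Hcu sub_rho.
  - move=> z _; exact: uin_pos.
have [x1 [Hx1 Hmax]] := EVT_cball (Rlt_le _ _ (Rle_lt_trans _ _ _ dy0 rho1)) Hphi.
set t := u x1 / u_in alpha r x0 x1 in Hmax.
have uy0 := uin_pos r x0 y a0.
have t1 : 1 < t.
  have := Hmax y (Rlt_le _ _ rho1).
  have : 1 < u y / u_in alpha r x0 y.
    apply: (Rmult_lt_reg_r (u_in alpha r x0 y)) => //.
    rewrite Rmult_1_l /Rdiv Rmult_assoc Rinv_l ?Rmult_1_r //; nz.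
  lra.
have t0 : 0 < t by lra.
have ux1 := uin_pos r x0 x1 a0.
have dx1 : Defs.norm (vsub x1 x0) < r by lra.
pose r1 := r - Defs.norm (vsub x1 x0).
have r10 : 0 < r1 by rewrite /r1; lra.
have ball1 : forall z, Defs.ball x1 r1 z -> Defs.ball x0 r z.
  move=> z hz; exact: (ball_sub dx1 hz).
have Hle : forall z, Defs.ball x1 r1 z -> u z <= t * u_in alpha r x0 z.
  move=> z Hz; have Hz0 := ball1 z Hz.
  have uz0 := uin_pos r x0 z a0.
  case: (Rle_lt_dec (Defs.norm (vsub z x0)) rho) => hz.
    have := Hmax z hz.
    have -> : u z / u_in alpha r x0 z = u z * / u_in alpha r x0 z by [].
    move=> h; have := Rmult_le_compat_r (u_in alpha r x0 z) _ _ (Rlt_le _ _ uz0) h.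
    rewrite Rmult_assoc Rinv_l ?Rmult_1_r //; nz.
  have := Hd z Hz0 ltac:(lra).
  have := HM z (Rlt_le _ _ Hz0).
  nra.
have := Hsub x1 r1 (fun z => t * u_in alpha r x0 z) (fun i z => t * Du i z)
  (fun i j z => t * D2u i j z) (sub_r x1 (Rlt_le _ _ dx1)) r10
  (fun z hz => sub_r z (Rlt_le _ _ (ball1 z hz)))
  (C2_scale_sub t HC ball1)
  ltac:(rewrite /t; field; nz) Hle _ (scaled_eig r0 HC dx1 t0).
move=> [_ Hf1].
have s01 : 0 < Rpower t (- (4 / (INR n - 2))) < 1.
  split; [exact: exp_pos|apply: Rp_neg_lt1 => //; exact: e4_pos].
have := f_scale_lt1 Hs HG Hf s01; lra.
Qed.

Lemma cmp_lower Rad (x0 : Vec n) u R' :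
  0 < Rad -> Rad < R' -> cont_on (Defs.ball x0 Rad) u -> visc_super Gam f (Defs.ball x0 Rad) u ->
  (forall x, Defs.ball x0 Rad x -> 0 < u x) -> blows_up_at_bdry x0 Rad u ->
  forall y, Defs.ball x0 Rad y -> u_in alpha R' x0 y <= u y.
Proof.
move=> R0 RR Hc Hsup Hpos Hbu y Hy; apply: Rnot_lt_le => Hlt.
have R'0 : 0 < R' by lra.
have [Du [D2u HC]] := C2_of x0 R'0.
have [HG Hf] := const_facts.
have N3 := INR_ge3 Hn.
have k0 : 0 < (INR n - 2) / 2 by lra.
pose K := alpha * Rpower (R' / (R' * R' - Rad * Rad)) ((INR n - 2) / 2).
have HK : forall z, Defs.ball x0 Rad z -> u_in alpha R' x0 z <= K.
  move=> z hz; rewrite /u_in /K; apply: Rmult_le_compat_l; first lra.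
  have h2 := norm2_lt R0 hz; have h3 := norm2_ge0 (vsub z x0).
  apply: Rpower_le_base => //.
    apply: Rdiv_lt_0_compat => //; nra.
  apply: Rmult_le_compat_l; first lra.
  apply: Rinv_le_contravar; nra.
have [d [d0 Hd]] := Hbu K.
set dy := Defs.norm (vsub y x0).
have dy0 : 0 <= dy := norm_ge0 _.
have dyr : dy < Rad by exact: Hy.
pose rho := Rmax (Rad - d / 2) ((dy + Rad) / 2).
have rho1 : dy < rho by have := Rmax_r (Rad - d / 2) ((dy + Rad) / 2); rewrite -/rho; lra.
have rho2 : rho < Rad by rewrite /rho; apply: Rmax_lub_lt; lra.
have rho3 : Rad - rho < d by have := Rmax_l (Rad - d / 2) ((dy + Rad) / 2); rewrite -/rho; lra.
have sub_rho : forall z, Defs.norm (vsub z x0) <= rho -> Defs.ball x0 Rad z.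
  move=> z hz; rewrite /Defs.ball; lra.
have sub_R' : forall z, Defs.ball x0 Rad z -> Defs.ball x0 R' z.
  move=> z; rewrite /Defs.ball; lra.
have Hphi : cont_on (fun z => Defs.norm (vsub z x0) <= rho) (fun z => -1 * (u z / u_in alpha R' x0 z)).
  apply: cont_on_scale; apply: cont_on_div.
  - exact: cont_on_sub Hc sub_rho.
  - have [_ [_ [Hcu _]]] := HC; apply: cont_on_sub Hcu _ => z hz; apply: sub_R'; exact: sub_rho.
  - move=> z _; exact: uin_pos.
have [x1 [Hx1 Hmin]] := EVT_cball (Rlt_le _ _ (Rle_lt_trans _ _ _ dy0 rho1)) Hphi.
set t := u x1 / u_in alpha R' x0 x1 in Hmin.
have uy0 := uin_pos R' x0 y a0.
have ux1 := uin_pos R' x0 x1 a0.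
have dx1 : Defs.norm (vsub x1 x0) < Rad by lra.
have t1 : t < 1.
  have := Hmin y (Rlt_le _ _ rho1).
  have : u y / u_in alpha R' x0 y < 1.
    apply: (Rmult_lt_reg_r (u_in alpha R' x0 y)) => //.
    rewrite Rmult_1_l /Rdiv Rmult_assoc Rinv_l ?Rmult_1_r //; nz.
  lra.
have t0 : 0 < t.
  rewrite /t; apply: Rdiv_lt_0_compat => //; exact: Hpos.
pose r1 := Rad - Defs.norm (vsub x1 x0).
have r10 : 0 < r1 by rewrite /r1; lra.
have ball1 : forall z, Defs.ball x1 r1 z -> Defs.ball x0 Rad z.
  move=> z hz; exact: (ball_sub dx1 hz).
have Hge : forall z, Defs.ball x1 r1 z -> t * u_in alpha R' x0 z <= u z.
  move=> z Hz; have Hz0 := ball1 z Hz.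
  have uz0 := uin_pos R' x0 z a0.
  case: (Rle_lt_dec (Defs.norm (vsub z x0)) rho) => hz.
    have := Hmin z hz.
    have -> : u z / u_in alpha R' x0 z = u z * / u_in alpha R' x0 z by [].
    move=> h; have h' : t <= u z * / u_in alpha R' x0 z by lra.
    have := Rmult_le_compat_r (u_in alpha R' x0 z) _ _ (Rlt_le _ _ uz0) h'.
    rewrite Rmult_assoc Rinv_l ?Rmult_1_r //; nz.
  have := Hd z Hz0 ltac:(lra).
  have := HK z Hz0.
  nra.
have := Hsup x1 r1 (fun z => t * u_in alpha R' x0 z) (fun i z => t * Du i z)
  (fun i j z => t * D2u i j z) (sub_rho x1 Hx1) r10 ball1
  (C2_scale_sub t HC (fun z hz => sub_R' z (ball1 z hz)))
  ltac:(rewrite /t; field; nz) Hge _ (scaled_eig R'0 HC (sub_R' x1 dx1) t0).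
have s1 : 1 < Rpower t (- (4 / (INR n - 2))).
  apply: Rp_neg_gt1; [lra|exact: e4_pos].
have [Hg1 Hf1] := f_scale_gt1 Hs HG Hf s1.
case=> [H|H]; last lra.
apply: H; exact: closure_of.
Qed.

Lemma uin_visc Rad (x0 : Vec n) : 0 < Rad -> visc_solution Gam f (Defs.ball x0 Rad) (u_in alpha Rad x0).
Proof.
move=> R0.
have [Du [D2u HC]] := C2_of x0 R0.
have [HG Hf] := const_facts.
have N3 := INR_ge3 Hn.
have HC' := HC; move: HC' => [_ [_ [Hcu _]]].
split; first exact: Hcu.
split.
- move=> x1 r phi Dphi D2phi Hx1 r0 Hsub HCp Heq Hle mu Heig.
  have HCpsi := C2_minus_sub HC HCp Hsub.
  have [G0 PSD] := touch_min r0 HCpsi (fun y hy => ltac:(cbv beta; rewrite Heq; have := Hle y hy; lra)).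
  have Hd : forall i, Dphi i x1 = Du i x1 by move=> i; have := G0 i; lra.
  pose kap := 2 / (INR n - 2) * Rpower (u_in alpha Rad x0 x1) (- ((INR n + 2) / (INR n - 2))).
  have kap0 : 0 < kap.
    rewrite /kap; apply: Rmult_lt_0_compat; [apply: Rdiv_lt_0_compat; lra|exact: exp_pos].
  have HM : forall k l, neg_mx (conf_hess phi Dphi D2phi x1) k l =
      cst n alpha * kdelta k l + (fun k l => kap * (D2phi k l x1 - D2u k l x1)) k l.
    move=> k l; rewrite (hess_diff D2phi D2u k l Heq Hd) (hyp_hess Hn a0 R0 HC Hx1) //.
  apply: (f_sub Hs HG Hf (@cst_pos n alpha)) => i.
  have [v ->] := eig_qf Heig HM i.
  rewrite qf_scale; have := PSD v; rewrite /qf => h; nra.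
- move=> x1 r phi Dphi D2phi Hx1 r0 Hsub HCp Heq Hle mu Heig.
  have HCpsi := C2_minus_sub HCp (C2_sub HC Hsub) (fun z h => h).
  have [G0 PSD] := touch_min r0 HCpsi (fun y hy => ltac:(cbv beta; rewrite Heq; have := Hle y hy; lra)).
  have Hd : forall i, Dphi i x1 = Du i x1 by move=> i; have := G0 i; lra.
  pose kap := 2 / (INR n - 2) * Rpower (u_in alpha Rad x0 x1) (- ((INR n + 2) / (INR n - 2))).
  have kap0 : 0 < kap.
    rewrite /kap; apply: Rmult_lt_0_compat; [apply: Rdiv_lt_0_compat; lra|exact: exp_pos].
  have HM : forall k l, neg_mx (conf_hess phi Dphi D2phi x1) k l =
      cst n alpha * kdelta k l + (fun k l => (- kap) * (D2u k l x1 - D2phi k l x1)) k l.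
    move=> k l; rewrite (hess_diff D2phi D2u k l Heq Hd) (hyp_hess Hn a0 R0 HC Hx1) // /kap; ring.
  apply: (f_super Hs HG Hf (@cst_pos n alpha)) => i.
  have [v ->] := eig_qf Heig HM i.
  rewrite qf_scale; have := PSD v; rewrite /qf => h; nra.
Qed.
End Main.

Unset Implicit Arguments.

Theorem lemma2p3 (n : nat) (Gam : Vec n -> Prop) (f : Vec n -> R)
  (alpha : R) (Rad : R) (x0 : Vec n) :
  (3 <= n)%nat ->
  structural Gam f ->
  (* alpha = alpha(f): the constant making the canonical functions solutions *)
  0 < alpha ->
  (forall (R1 : R) (y0 : Vec n), 0 < R1 ->
     classical_solution Gam f (ball y0 R1) (u_in alpha R1 y0) /\
     classical_solution Gam f (outside_cball y0 R1) (u_out alpha R1 y0)) ->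
  0 < Rad ->
  (visc_solution Gam f (ball x0 Rad) (u_in alpha Rad x0) /\
   (forall x, ball x0 Rad x -> 0 < u_in alpha Rad x0 x) /\
   blows_up_at_bdry x0 Rad (u_in alpha Rad x0)) /\
  (forall u : Vec n -> R,
     visc_solution Gam f (ball x0 Rad) u ->
     (forall x, ball x0 Rad x -> 0 < u x) ->
     blows_up_at_bdry x0 Rad u ->
     forall x, ball x0 Rad x -> u x = u_in alpha Rad x0 x).
Proof.
move=> Hn Hs a0 Hcl R0.
split.
  split; first exact: (uin_visc Hn Hs a0 Hcl x0 R0).
  split; first by move=> x _; exact: uin_pos.
  exact: blowup_uin.
move=> u [Hc [Hsub Hsup]] Hpos Hbu x Hx.
have dx0 := norm_ge0 (vsub x x0).
have dxR : Defs.norm (vsub x x0) < Rad by exact: Hx.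
apply: Rle_antisym.
- apply: Rnot_lt_le => Hlt.
  have [d [d0 Hd]] := uin_radius_cont alpha R0 Hx (Rlt_Rminus _ _ Hlt).
  pose h := - Rmin (d / 2) ((Rad - Defs.norm (vsub x x0)) / 2).
  have hm1 := Rmin_l (d / 2) ((Rad - Defs.norm (vsub x x0)) / 2).
  have hm2 := Rmin_r (d / 2) ((Rad - Defs.norm (vsub x x0)) / 2).
  have hm0 : 0 < Rmin (d / 2) ((Rad - Defs.norm (vsub x x0)) / 2) by apply: Rmin_pos; lra.
  have Hh : Rabs h < d by rewrite /h Rabs_Ropp Rabs_right; lra.
  have := Hd h Hh.
  have r0 : 0 < Rad + h by rewrite /h; lra.
  have rR : Rad + h < Rad by rewrite /h; lra.
  have Hxr : Defs.ball x0 (Rad + h) x by rewrite /Defs.ball /h; lra.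
  have := cmp_upper Hn Hs a0 Hcl r0 rR Hc Hsub Hpos Hxr.
  split_Rabs; lra.
- apply: Rnot_lt_le => Hlt.
  have [d [d0 Hd]] := uin_radius_cont alpha R0 Hx (Rlt_Rminus _ _ Hlt).
  have Hh : Rabs (d / 2) < d by rewrite Rabs_right; lra.
  have := Hd _ Hh.
  have RR : Rad < Rad + d / 2 by lra.
  have := cmp_lower Hn Hs a0 Hcl R0 RR Hc Hsup Hpos Hbu Hx.
  split_Rabs; lra.
Qed.
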